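(* Let $0<\epsilon<0.5$ and $r<1$. Let $\gamma_k=\frac{\gamma_0}{(k+1)^{0.5+0.5\epsilon}}$ and $\lambda_k=\frac{\lambda_0}{(k+1)^{0.5-\epsilon}}$ for $k\ge0$, with $\gamma_0,\lambda_0>0$ and $\gamma_0\lambda_0\mu_h\le 2m$. Let $\{\bar x_N\}$ be generated by the IR-IG method with these sequences and averaging parameter $r$. Then (a) $\bar x_N\to x_h^*$ as $N\to\infty$; (b) $f(\bar x_N)-f^*=\mathcal{O}\big(1/N^{0.5-\epsilon}\big)$.
   Context: Standing setup: $X\subset\mathbb{R}^n$ is nonempty, compact and convex. $f_1,\dots,f_m:\mathbb{R}^n\to\mathbb{R}$ are convex (possibly nondifferentiable) functions and $f=\sum_{i=1}^m f_i$. $h:\mathbb{R}^n\to\mathbb{R}$ is strongly convex with parameter $\mu_h>0$ (possibly nondifferentiable). Let $f^*=\min_{x\in X}f(x)$, $X^*=\arg\min_{x\in X}f(x)$, and let $x_h^*$ be the unique minimizer of $h$ over $X^*$. $\mathcal{P}_X$ denotes Euclidean projection onto $X$. IR-IG method: given $x_0\in X$, positive sequences $\{\gamma_k\}$, $\{\lambda_k\}$ and a constant $r<1$, for each $k\ge0$ set $x_{k,0}=x_k$; for $i=0,\dots,m-1$ pick any $g_{f_{i+1}}(x_{k,i})\in\partial f_{i+1}(x_{k,i})$ and $g_h(x_{k,i})\in\partial h(x_{k,i})$ and set $x_{k,i+1}=\mathcal{P}_X\big(x_{k,i}-\gamma_k\big(g_{f_{i+1}}(x_{k,i})+\tfrac{\lambda_k}{m}g_h(x_{k,i})\big)\big)$;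 then set $x_{k+1}=x_{k,m}$. The averaged iterates are $\bar x_N=\sum_{k=0}^{N-1}\gamma_k^r x_k\big/\sum_{k=0}^{N-1}\gamma_k^r$ for $N\ge1$. *)

(* Defs.v *)
From Stdlib Require Import Reals.
From mathcomp Require Import ssreflect ssrfun ssrbool eqtype ssrnat seq fintype bigop.

Set Implicit Arguments.
Unset Strict Implicit.

Local Open Scope R_scope.

Definition Vec (n : nat) := 'I_n -> R.

Definition vadd {n} (u v : Vec n) : Vec n := fun i => u i + v i.
Definition vsub {n} (u v : Vec n) : Vec n := fun i => u i - v i.
Definition vscale {n} (a : R) (u : Vec n) : Vec n := fun i => a * u i.
Definition dot {n} (u v : Vec n) : R := \big[Rplus/0]_(i < n) (u i * v i).
Definition vnorm {n} (u : Vec n) : R := sqrt (dot u u).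

Definition vsum {n} (N : nat) (F : nat -> Vec n) : Vec n :=
  fun i => \big[Rplus/0]_(0 <= k < N) (F k i).

Definition convex_set {n} (X : Vec n -> Prop) : Prop :=
  forall x y t, X x -> X y -> 0 <= t <= 1 ->
    X (vadd (vscale t x) (vscale (1 - t) y)).

(* X is compact (in R^n: closed and bounded, Heine-Borel) *)
Definition closed_set {n} (X : Vec n -> Prop) : Prop :=
  forall (u : nat -> Vec n) (x : Vec n),
    (forall k, X (u k)) -> Un_cv (fun k => vnorm (vsub (u k) x)) 0 -> X x.
Definition bounded_set {n} (X : Vec n -> Prop) : Prop :=
  exists M, forall x, X x -> vnorm x <= M.
Definition compact_set {n} (X : Vec n -> Prop) : Prop :=
  closed_set X /\ bounded_set X.

Definition convex_fun {n} (f : Vec n -> R) : Prop :=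
  forall x y t, 0 <= t <= 1 ->
    f (vadd (vscale t x) (vscale (1 - t) y)) <= t * f x + (1 - t) * f y.

Definition strongly_convex {n} (h : Vec n -> R) (mu : R) : Prop :=
  forall x y t, 0 <= t <= 1 ->
    h (vadd (vscale t x) (vscale (1 - t) y))
      <= t * h x + (1 - t) * h y - mu / 2 * t * (1 - t) * (vnorm (vsub x y))^2.

Definition subgrad {n} (f : Vec n -> R) (x g : Vec n) : Prop :=
  forall y, f y >= f x + dot g (vsub y x).

Definition is_proj {n} (X : Vec n -> Prop) (z p : Vec n) : Prop :=
  X p /\ forall y, X y -> vnorm (vsub z p) <= vnorm (vsub z y).

(* f = f_1 + ... + f_m, with f_{i+1} = fs i *)
Definition fsum {n} (m : nat) (fs : nat -> Vec n -> R) (x : Vec n) : R :=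
  \big[Rplus/0]_(0 <= i < m) fs i x.

Definition is_argmin {n} (X : Vec n -> Prop) (f : Vec n -> R) (x : Vec n) : Prop :=
  X x /\ forall y, X y -> f x <= f y.

Definition is_xh {n} (X : Vec n -> Prop) (f h : Vec n -> R) (x : Vec n) : Prop :=
  is_argmin X f x /\ forall y, is_argmin X f y -> h x <= h y.

(* IR-IG method: x k i stands for x_{k,i}; x_k = x k 0.  Each inner step uses
   some (arbitrary) subgradients of f_{i+1} and h at x_{k,i}. *)
Definition IRIG_run {n} (m : nat) (X : Vec n -> Prop) (fs : nat -> Vec n -> R)
    (h : Vec n -> R) (gam lam : nat -> R) (x : nat -> nat -> Vec n) : Prop :=
  X (x 0%nat 0%nat) /\
  (forall k, x (S k) 0%nat = x k m) /\
  (forall k i, (i < m)%nat ->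
     exists gf gh, subgrad (fs i) (x k i) gf /\ subgrad h (x k i) gh /\
       is_proj X
         (vsub (x k i) (vscale (gam k) (vadd gf (vscale (lam k / INR m) gh))))
         (x k (S i))).

Definition xbar {n} (gam : nat -> R) (r : R) (x : nat -> nat -> Vec n) (N : nat) : Vec n :=
  vscale (/ (\big[Rplus/0]_(0 <= k < N) Rpower (gam k) r))
         (vsum N (fun k => vscale (Rpower (gam k) r) (x k 0%nat))).

Definition gam_seq (gam0 eps : R) (k : nat) : R :=
  gam0 / Rpower (INR (S k)) ((1 / 2) + eps / 2).
Definition lam_seq (lam0 eps : R) (k : nat) : R :=
  lam0 / Rpower (INR (S k)) ((1 / 2) - eps).

(* Main.v *)
From HB Require Import structures.
Require Import Defs.
From Stdlib Require Import Reals Lra Lia FunctionalExtensionality ClassicalEpsilon Classical.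
From Stdlib Require Rtopology.
From mathcomp Require Import ssreflect ssrfun ssrbool eqtype ssrnat seq fintype bigop.
From mathcomp Require Import zify.
Local Open Scope R_scope.
Set Warnings "-notation-overridden -redundant-canonical-projection".

Lemma Rplus_assoc' : associative Rplus. Proof. move=> a b c; ring. Qed.
HB.instance Definition _ := Monoid.isComLaw.Build R 0 Rplus Rplus_assoc' Rplus_comm Rplus_0_l.


Lemma sum_add {I : Type} (s : seq I) (F G : I -> R) :
  \big[Rplus/0]_(i <- s) (F i + G i) = \big[Rplus/0]_(i <- s) F i + \big[Rplus/0]_(i <- s) G i.
Proof. elim: s => [|a s IH]; rewrite ?big_nil ?big_cons; [ring| rewrite IH; ring]. Qed.

Lemma sum_scal {I : Type} (s : seq I) (c : R) (F : I -> R) :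
  \big[Rplus/0]_(i <- s) (c * F i) = c * \big[Rplus/0]_(i <- s) F i.
Proof. elim: s => [|a s IH]; rewrite ?big_nil ?big_cons; [ring| rewrite IH; ring]. Qed.

Lemma sum_ext {I : Type} (s : seq I) (F G : I -> R) :
  (forall i, F i = G i) -> \big[Rplus/0]_(i <- s) F i = \big[Rplus/0]_(i <- s) G i.
Proof. move=> H; elim: s => [|a s IH]; rewrite ?big_nil ?big_cons; [done| rewrite IH H //]. Qed.

Lemma sum_le {I : Type} (s : seq I) (F G : I -> R) :
  (forall i, F i <= G i) -> \big[Rplus/0]_(i <- s) F i <= \big[Rplus/0]_(i <- s) G i.
Proof. move=> H; elim: s => [|a s IH]; rewrite ?big_nil ?big_cons; [lra| have := H a; lra]. Qed.

Lemma sum_ge0 {I : Type} (s : seq I) (F : I -> R) :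
  (forall i, 0 <= F i) -> 0 <= \big[Rplus/0]_(i <- s) F i.
Proof. move=> H; elim: s => [|a s IH]; rewrite ?big_nil ?big_cons; [lra| have := H a; lra]. Qed.

Lemma sum_single_le {I : eqType} (s : seq I) (F : I -> R) i :
  (forall i, 0 <= F i) -> i \in s -> F i <= \big[Rplus/0]_(j <- s) F j.
Proof.
move=> H; elim: s => [|a s IH] //; rewrite in_cons big_cons => /orP [/eqP ->|Hi].
- have := sum_ge0 s F H; lra.
- have := IH Hi; have := H a; lra.
Qed.

Lemma sum_zero_each {I : eqType} (s : seq I) (F : I -> R) i :
  (forall i, 0 <= F i) -> \big[Rplus/0]_(j <- s) F j = 0 -> i \in s -> F i = 0.
Proof.
move=> H H0 Hi; have := sum_single_le s F i H Hi; have := H i; lra.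
Qed.

Definition nsq {n} (u : Vec n) := dot u u.

Lemma vext {n} (u v : Vec n) : (forall i, u i = v i) -> u = v.
Proof. move=> H; apply: functional_extensionality => i; exact: H. Qed.

Lemma dot_sym {n} (u v : Vec n) : dot u v = dot v u.
Proof. rewrite /dot; apply: sum_ext => i; ring. Qed.
Lemma dot_addl {n} (u v w : Vec n) : dot (vadd u v) w = dot u w + dot v w.
Proof. rewrite /dot -sum_add; apply: sum_ext => i; rewrite /vadd; ring. Qed.
Lemma dot_scalel {n} a (u w : Vec n) : dot (vscale a u) w = a * dot u w.
Proof. rewrite /dot -sum_scal; apply: sum_ext => i; rewrite /vscale; ring. Qed.
Lemma dot_subl {n} (u v w : Vec n) : dot (vsub u v) w = dot u w - dot v w.
Proof.
rewrite (_ : vsub u v = vadd u (vscale (-1) v)); first by rewrite dot_addl dot_scalel; ring.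
by apply: vext => i; rewrite /vsub /vadd /vscale; ring.
Qed.
Lemma dot_addr {n} (u v w : Vec n) : dot w (vadd u v) = dot w u + dot w v.
Proof. by rewrite dot_sym dot_addl !(dot_sym w). Qed.
Lemma dot_subr {n} (u v w : Vec n) : dot w (vsub u v) = dot w u - dot w v.
Proof. by rewrite dot_sym dot_subl !(dot_sym w). Qed.
Lemma dot_scaler {n} a (u w : Vec n) : dot w (vscale a u) = a * dot w u.
Proof. by rewrite dot_sym dot_scalel (dot_sym w). Qed.
Lemma nsq_ge0 {n} (u : Vec n) : 0 <= nsq u.
Proof. apply: sum_ge0 => i; apply: Rle_0_sqr. Qed.
Lemma vnorm_ge0 {n} (u : Vec n) : 0 <= vnorm u.
Proof. exact: sqrt_pos. Qed.
Lemma vnorm_sq {n} (u : Vec n) : vnorm u * vnorm u = nsq u.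
Proof. rewrite /vnorm sqrt_sqrt //; exact: nsq_ge0. Qed.
Lemma vnorm_pow {n} (u : Vec n) : vnorm u ^ 2 = nsq u.
Proof. rewrite -vnorm_sq; ring. Qed.

Lemma vnorm_le {n} (u v : Vec n) : nsq u <= nsq v -> vnorm u <= vnorm v.
Proof. move=> H; apply: sqrt_le_1_alt; exact: H. Qed.
Lemma vnorm_le_inv {n} (u v : Vec n) : vnorm u <= vnorm v -> nsq u <= nsq v.
Proof.
move=> H; rewrite -!vnorm_sq; have := vnorm_ge0 u; nra.
Qed.
Lemma vnorm_le_c {n} (u : Vec n) c : 0 <= c -> nsq u <= c * c -> vnorm u <= c.
Proof. move=> Hc H; rewrite /vnorm -(sqrt_square c) //; apply: sqrt_le_1_alt; exact: H. Qed.

Lemma le_pos_forall (a c : R) : 0 <= c -> (forall t, 0 < t -> a <= t * c) -> a <= 0.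
Proof.
move=> Hc H; case: (Rle_or_lt a 0) => // Ha.
have := H (a / (2 * (c + 1))); rewrite /Rdiv.
have Hp : 0 < / (2 * (c+1)) by apply: Rinv_0_lt_compat; lra.
move=> /(_ ltac:(nra)) H1.
have : a * / (2 * (c + 1)) * c < a.
  have : a * / (2 * (c + 1)) * (2 * (c+1)) = a by field; lra.
  nra.
lra.
Qed.

Lemma cauchy_schwarz {n} (u v : Vec n) : dot u v <= vnorm u * vnorm v.
Proof.
have key : forall t, 0 < t -> 2 * dot u v <= t * nsq u + / t * nsq v.
  move=> t Ht; have := nsq_ge0 (vsub (vscale t u) v).
  rewrite /nsq !dot_subl !dot_subr !dot_scalel !dot_scaler (dot_sym v u).
  move=> H; have Hi : 0 < / t by apply: Rinv_0_lt_compat.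
  have : / t * (t * (t * dot u u) - t * dot u v - (t * dot u v - dot v v)) >= 0 by nra.
  have -> : / t * (t * (t * dot u u) - t * dot u v - (t * dot u v - dot v v)) =
     t * dot u u - 2 * dot u v + / t * dot v v by field; lra.
  rewrite /nsq; lra.
have Hu := vnorm_ge0 u; have Hv := vnorm_ge0 v.
have Eu := vnorm_sq u; have Ev := vnorm_sq v.
case: (Req_dec (vnorm u) 0) => Hu0.
- have : dot u v <= 0.
    apply: (@le_pos_forall _ (nsq v)); first exact: nsq_ge0.
    move=> t Ht; have := key (/ (2 * t)).
    have H2 : 0 < / (2 * t) by apply: Rinv_0_lt_compat; lra.
    move=> /(_ H2); rewrite Rinv_inv.
    have -> : nsq u = 0 by rewrite -Eu Hu0; ring.
    lra.
  rewrite Hu0; lra.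
case: (Req_dec (vnorm v) 0) => Hv0.
- have : dot u v <= 0.
    apply: (@le_pos_forall _ (nsq u)); first exact: nsq_ge0.
    move=> t Ht; have := key (t / 2).
    move=> /(_ ltac:(lra)).
    have -> : nsq v = 0 by rewrite -Ev Hv0; ring.
    rewrite Rmult_0_r; have := nsq_ge0 u; nra.
  rewrite Hv0; lra.
have := key (vnorm v / vnorm u) ltac:(apply: Rdiv_lt_0_compat; lra).
rewrite -Eu -Ev.
have -> : vnorm v / vnorm u * (vnorm u * vnorm u) + / (vnorm v / vnorm u) * (vnorm v * vnorm v)
  = 2 * (vnorm u * vnorm v) by field; lra.
lra.
Qed.

Lemma dot_abs {n} (u v : Vec n) : Rabs (dot u v) <= vnorm u * vnorm v.
Proof.
apply: Rabs_le; split; last exact: cauchy_schwarz.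
have := cauchy_schwarz (vscale (-1) u) v.
rewrite dot_scalel.
have -> : vnorm (vscale (-1) u) = vnorm u.
  rewrite /vnorm /nsq dot_scalel dot_scaler; congr sqrt; ring.
lra.
Qed.

Lemma vnorm_triangle {n} (u v : Vec n) : vnorm (vadd u v) <= vnorm u + vnorm v.
Proof.
apply: vnorm_le_c; first by have := vnorm_ge0 u; have := vnorm_ge0 v; lra.
rewrite /nsq dot_addl !dot_addr (dot_sym v u).
have Eu := vnorm_sq u; have Ev := vnorm_sq v; rewrite /nsq in Eu Ev.
have := cauchy_schwarz u v; have := vnorm_ge0 u; have := vnorm_ge0 v; nra.
Qed.

Lemma vnorm_scale {n} a (u : Vec n) : vnorm (vscale a u) = Rabs a * vnorm u.
Proof.
rewrite /vnorm dot_scalel dot_scaler -Rmult_assoc.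
rewrite sqrt_mult; [|nra|exact: nsq_ge0].
congr (_ * _); rewrite -(sqrt_Rsqr_abs a) /Rsqr //.
Qed.

Lemma vsub_triangle {n} (a b c : Vec n) : vnorm (vsub a c) <= vnorm (vsub a b) + vnorm (vsub b c).
Proof.
have -> : vsub a c = vadd (vsub a b) (vsub b c) by apply: vext => i; rewrite /vsub /vadd; ring.
exact: vnorm_triangle.
Qed.

Lemma vsub_sym {n} (a b : Vec n) : vnorm (vsub a b) = vnorm (vsub b a).
Proof.
have -> : vsub a b = vscale (-1) (vsub b a) by apply: vext => i; rewrite /vsub /vscale; ring.
rewrite vnorm_scale Rabs_Ropp Rabs_R1; ring.
Qed.

Lemma vsub_norm_le {n} (a b : Vec n) : vnorm (vsub a b) <= vnorm a + vnorm b.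
Proof.
have -> : vsub a b = vadd a (vscale (-1) b) by apply: vext => i; rewrite /vsub /vadd /vscale; ring.
rewrite (Rplus_comm (vnorm a)); apply: Rle_trans (vnorm_triangle _ _) _.
rewrite vnorm_scale Rabs_Ropp Rabs_R1; lra.
Qed.

Lemma sumS (N : nat) (F : nat -> R) :
  \big[Rplus/0]_(0 <= k < N.+1) F k = \big[Rplus/0]_(0 <= k < N) F k + F N.
Proof. by rewrite big_nat_recr. Qed.

Definition vzero {n} : Vec n := fun _ => 0.

Lemma nsq_vzero {n} : nsq (@vzero n) = 0.
Proof. rewrite /nsq /dot (sum_ext _ _ (fun _ => 0)); last by move=> i; rewrite /vzero; ring.
by elim: (index_enum _) => [|a s IH]; rewrite ?big_nil ?big_cons ?IH; lra. Qed.
Lemma vnorm_vzero {n} : vnorm (@vzero n) = 0.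
Proof. by rewrite /vnorm -/(nsq vzero) nsq_vzero sqrt_0. Qed.

Lemma nsq_eq0 {n} (v : Vec n) : nsq v = 0 -> v = vzero.
Proof.
move=> H; apply: vext => i; rewrite /vzero.
have := @sum_zero_each _ (index_enum 'I_n) (fun j => v j * v j) i (fun j => Rle_0_sqr (v j)) H (mem_index_enum i).
move=> /= E; nra.
Qed.

Lemma vnorm_eq0 {n} (v : Vec n) : vnorm v = 0 -> v = vzero.
Proof. move=> H; apply: nsq_eq0; rewrite -vnorm_sq H; ring. Qed.

Lemma comp_le_norm {n} (v : Vec n) i : Rabs (v i) <= vnorm v.
Proof.
rewrite -(sqrt_Rsqr_abs (v i)); apply: sqrt_le_1_alt; rewrite /Rsqr.
exact: (@sum_single_le _ (index_enum 'I_n) (fun j => v j * v j) i (fun j => Rle_0_sqr (v j)) (mem_index_enum i)).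
Qed.

Lemma nsq_sub {n} (a b : Vec n) : nsq (vsub a b) = nsq a - 2 * dot a b + nsq b.
Proof. rewrite /nsq !dot_subl !dot_subr (dot_sym b a); ring. Qed.
Lemma nsq_sub_scale {n} (a b : Vec n) t :
  nsq (vsub a (vscale t b)) = nsq a - 2 * t * dot a b + t * t * nsq b.
Proof. rewrite /nsq !dot_subl !dot_subr !dot_scalel !dot_scaler (dot_sym b a); ring. Qed.

Lemma proj_nonexp {n} (X : Vec n -> Prop) z p y :
  convex_set X -> is_proj X z p -> X y -> vnorm (vsub p y) <= vnorm (vsub z y).
Proof.
move=> HX [Xp Hp] Xy.
set a := vsub z p; set b := vsub y p.
have Hab : dot a b <= 0.
  apply: (@le_pos_forall _ (nsq b)); first exact: nsq_ge0.
  have key : forall t, 0 < t <= 1 -> dot a b <= t / 2 * nsq b.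
    move=> t Ht; have Xq := HX y p t Xy Xp ltac:(lra).
    have := vnorm_le_inv _ _ (Hp _ Xq).
    have -> : vsub z (vadd (vscale t y) (vscale (1 - t) p)) = vsub a (vscale t b).
      by apply: vext => i; rewrite /a /b /vsub /vadd /vscale; ring.
    rewrite nsq_sub_scale -/a => H.
    have : 2 * t * dot a b <= t * (t * nsq b) by nra.
    move=> H2; have : 2 * dot a b <= t * nsq b.
      apply: (Rmult_le_reg_l t); [lra|]; nra.
    lra.
  move=> t Ht; have Hb := nsq_ge0 b.
  case: (Rle_or_lt t 1) => Ht1.
  - have := key t ltac:(lra); nra.
  - have := key 1 ltac:(lra); nra.
rewrite vsub_sym (vsub_sym z y).
apply: vnorm_le.
have -> : vsub y z = vsub b a by apply: vext => i; rewrite /a /b /vsub; ring.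
rewrite -/b nsq_sub (dot_sym b a); have := nsq_ge0 a; lra.
Qed.

Definition comb {n} {I} (s : seq I) (a : I -> R) (p : I -> Vec n) : Vec n :=
  fun j => \big[Rplus/0]_(i <- s) (a i * p i j).

Lemma sum_zero_in {I : eqType} (s : seq I) (F : I -> R) :
  (forall i, i \in s -> F i = 0) -> \big[Rplus/0]_(i <- s) F i = 0.
Proof.
elim: s => [|a s IH] H; rewrite ?big_nil ?big_cons //.
rewrite H ?mem_head // IH; first ring.
by move=> i Hi; apply: H; rewrite in_cons Hi orbT.
Qed.

Lemma comb_ind {n} {I : eqType} (Q : Vec n -> R -> Prop) :
  (forall x y c d t, Q x c -> Q y d -> 0 <= t <= 1 ->
     Q (vadd (vscale t x) (vscale (1 - t) y)) (t * c + (1 - t) * d)) ->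
  forall (s : seq I) a p c, (forall i, 0 <= a i) -> (forall i, Q (p i) (c i)) ->
  0 < \big[Rplus/0]_(i <- s) a i ->
  Q (vscale (/ \big[Rplus/0]_(i <- s) a i) (comb s a p))
    ((/ \big[Rplus/0]_(i <- s) a i) * \big[Rplus/0]_(i <- s) (a i * c i)).
Proof.
move=> Hmix; elim=> [|i s IH] a p c Ha HQ; rewrite ?big_nil; first lra.
rewrite !big_cons => Hpos.
have HS' := sum_ge0 s a Ha.
have Hai := Ha i.
case: (Req_dec (\big[Rplus/0]_(j <- s) a j) 0) => HS0.
- have Hz : forall j, j \in s -> a j = 0.
    move=> j Hj; exact: (sum_zero_each s a j Ha HS0 Hj).
  have E1 : \big[Rplus/0]_(j <- s) (a j * c j) = 0.
    apply: sum_zero_in => j Hj; rewrite Hz //; ring.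
  have Hai0 : 0 < a i by lra.
  have -> : vscale (/ (a i + \big[Rplus/0]_(j <- s) a j)) (comb (i :: s) a p) = p i.
    apply: vext => k; rewrite /vscale /comb big_cons.
    have -> : \big[Rplus/0]_(j <- s) (a j * p j k) = 0.
      apply: sum_zero_in => j Hj; rewrite Hz //; ring.
    rewrite HS0; field; lra.
  rewrite HS0 E1.
  have -> : (/ (a i + 0)) * (a i * c i + 0) = c i by field; lra.
  exact: HQ.
- have HSp : 0 < \big[Rplus/0]_(j <- s) a j by lra.
  have IH' := IH a p c Ha HQ HSp.
  set S' := \big[Rplus/0]_(j <- s) a j in HS0 HSp IH' *.
  set C' := \big[Rplus/0]_(j <- s) (a j * c j) in IH' *.
  set t := a i / (a i + S').
  have Ht : 0 <= t <= 1.
    rewrite /t; split; first by apply: Rmult_le_pos; [lra| apply: Rlt_le; apply: Rinv_0_lt_compat; lra].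
    apply: (Rmult_le_reg_r (a i + S')); first lra.
    rewrite /Rdiv Rmult_assoc Rinv_l; lra.
  have H := Hmix _ _ _ _ t (HQ i) IH' Ht.
  have -> : vscale (/ (a i + S')) (comb (i :: s) a p) =
            vadd (vscale t (p i)) (vscale (1 - t) (vscale (/ S') (comb s a p))).
    apply: vext => k; rewrite /vscale /vadd /comb big_cons /t.
    field; lra.
  have -> : (/ (a i + S')) * (a i * c i + C') = t * c i + (1 - t) * ((/ S') * C').
    rewrite /t; field; lra.
  exact: H.
Qed.

Lemma jensen_mix {n} (f : Vec n -> R) : convex_fun f ->
  forall x y c d t, f x <= c -> f y <= d -> 0 <= t <= 1 ->
     f (vadd (vscale t x) (vscale (1 - t) y)) <= t * c + (1 - t) * d.
Proof.
move=> Hf x y c d t Hx Hy Ht; apply: Rle_trans (Hf x y t Ht) _; nra.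
Qed.

Lemma set_mix {n} (X : Vec n -> Prop) : convex_set X ->
  forall x y (c d t : R), X x -> X y -> 0 <= t <= 1 ->
     X (vadd (vscale t x) (vscale (1 - t) y)).
Proof. move=> HX x y c d t Hx Hy Ht; exact: HX. Qed.

Lemma conv_line {n} (f : Vec n -> R) (e : Vec n) T t : convex_fun f -> 0 < T -> -T <= t <= T ->
  f (vscale t e) <= Rabs (f (vscale T e)) + Rabs (f (vscale (-T) e)).
Proof.
move=> Hf HT Ht.
set l := (t + T) / (2 * T).
have Hl : 0 <= l <= 1.
  rewrite /l; split.
  - apply: Rmult_le_pos; [lra| apply: Rlt_le; apply: Rinv_0_lt_compat; lra].
  - apply: (Rmult_le_reg_r (2 * T)); first lra.
    rewrite /Rdiv Rmult_assoc Rinv_l; lra.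
have -> : vscale t e = vadd (vscale l (vscale T e)) (vscale (1 - l) (vscale (-T) e)).
  apply: vext => i; rewrite /vadd /vscale /l; field; lra.
apply: Rle_trans (Hf _ _ _ Hl) _.
have := Rle_abs (f (vscale T e)); have := Rle_abs (f (vscale (-T) e)).
have := Rabs_pos (f (vscale T e)); have := Rabs_pos (f (vscale (-T) e)).
nra.
Qed.

Lemma sum_ones n : \big[Rplus/0]_(i < n) 1 = INR n.
Proof.
rewrite big_const_ord.
elim: n => [|k IH] //=; rewrite IH; case: k {IH} => [|k] /=; ring.
Qed.

Lemma conv_upper {n} (f : Vec n -> R) : convex_fun f -> forall K, 0 <= K ->
  exists U, forall v, vnorm v <= K -> f v <= U.
Proof.
move=> Hf K HK.
case: n f Hf => [|n] f Hf.
  exists (Rabs (f vzero)) => v _.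
  have -> : v = vzero by apply: vext => -[i Hi].
  exact: Rle_abs.
set T := INR n.+1 * K + 1.
have HT : 0 < T by rewrite /T; have := pos_INR n.+1; nra.
set e := fun (i j : 'I_n.+1) => if i == j then 1 else 0.
set c := fun i => Rabs (f (vscale T (e i))) + Rabs (f (vscale (-T) (e i))).
exists ((/ \big[Rplus/0]_(i < n.+1) 1) * \big[Rplus/0]_(i < n.+1) (1 * c i)) => v Hv.
have Hn : 0 < INR n.+1 by apply: lt_0_INR; lia.
have -> : v = vscale (/ \big[Rplus/0]_(i < n.+1) 1)
     (comb (index_enum 'I_n.+1) (fun _ => 1) (fun i => vscale (INR n.+1 * v i) (e i))).
  apply: vext => k; rewrite /vscale /comb sum_ones.
  set N1 := INR n.+1 in Hn *.
  rewrite (bigD1 k) // big1 /e; last first.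
    by move=> i /negbTE ->; ring.
  rewrite eqxx /=; field; lra.
have := (@comb_ind n.+1 _ (fun v c => f v <= c) (jensen_mix f Hf) (index_enum 'I_n.+1) (fun _ => 1) (fun i => vscale (INR n.+1 * v i) (e i)) c).
move=> H; apply: H.
- move=> i; lra.
- move=> i; apply: conv_line => //.
  have := comp_le_norm v i; move=> Hc.
  have Hb := Rle_trans _ _ _ Hc Hv.
  have := Rle_abs (v i); have := Rle_abs (- v i); rewrite Rabs_Ropp.
  have := pos_INR n.+1.
  rewrite /T; split; nra.
- have -> : \big[Rplus/0]_(i <- index_enum 'I_n.+1) (fun _ : 'I_n.+1 => 1) i = INR n.+1
    by exact: sum_ones.
  exact: Hn.
Qed.

Lemma conv_props {n} (f : Vec n -> R) Rb : convex_fun f -> 0 <= Rb ->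
  exists C, 0 <= C /\
   (forall x z, vnorm x <= Rb -> vnorm z <= Rb -> f x - f z <= C * vnorm (vsub x z)) /\
   (forall x g, vnorm x <= Rb -> subgrad f x g -> vnorm g <= C).
Proof.
move=> Hf HRb.
have [U HU] := conv_upper f Hf (Rb + 1) ltac:(lra).
set Lo := 2 * f vzero - U.
have HLo : forall v, vnorm v <= Rb + 1 -> Lo <= f v.
  move=> v Hv.
  have H1 := HU v Hv.
  have Hm : vnorm (vscale (-1) v) <= Rb + 1 by rewrite vnorm_scale Rabs_Ropp Rabs_R1; lra.
  have H2 := HU _ Hm.
  have E : (@vzero n) = vadd (vscale (1/2) v) (vscale (1 - 1/2) (vscale (-1) v)).
    by apply: vext => i; rewrite /vzero /vadd /vscale; field.
  have := Hf v (vscale (-1) v) (1/2) ltac:(lra); rewrite -E.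
  rewrite /Lo; lra.
have H0 : vnorm (@vzero n) <= Rb + 1 by rewrite vnorm_vzero; lra.
have HC : 0 <= U - Lo by have := HU _ H0; have := HLo _ H0; lra.
exists (U - Lo); split => //; split.
- move=> x z Hx Hz.
  set d := vnorm (vsub x z).
  have Hd : 0 <= d := vnorm_ge0 _.
  case: (Rle_or_lt 1 d) => Hd1.
  + have := HU x ltac:(lra); have := HLo z ltac:(lra); rewrite -/d; nra.
  case: (Req_dec d 0) => Hd0.
  + have : x = z.
      have := vnorm_eq0 _ Hd0 => E; apply: vext => i.
      have : vsub x z i = vzero i by rewrite E.
      rewrite /vsub /vzero; lra.
    move=> ->; rewrite -/d Hd0; lra.
  set w := vadd z (vscale (/ d) (vsub x z)).
  have Hw : vnorm w <= Rb + 1.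
    apply: Rle_trans (vnorm_triangle _ _) _.
    rewrite vnorm_scale Rabs_right; last by apply: Rle_ge; apply: Rlt_le; apply: Rinv_0_lt_compat; lra.
    rewrite -/d Rinv_l; lra.
  have Ex : x = vadd (vscale d w) (vscale (1 - d) z).
    apply: vext => i; rewrite /w /vadd /vscale /vsub; field; lra.
  have := Hf w z d ltac:(lra); rewrite -Ex.
  have := HU w Hw; have := HLo z ltac:(lra).
  rewrite -/d; nra.
- move=> x g Hx Hg.
  have Hng := vnorm_ge0 g.
  case: (Req_dec (vnorm g) 0) => Hg0; first lra.
  set y := vadd x (vscale (/ vnorm g) g).
  have Hy : vnorm y <= Rb + 1.
    apply: Rle_trans (vnorm_triangle _ _) _.
    rewrite vnorm_scale Rabs_right; last by apply: Rle_ge; apply: Rlt_le; apply: Rinv_0_lt_compat; lra.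
    rewrite Rinv_l; lra.
  have := Hg y.
  have -> : vsub y x = vscale (/ vnorm g) g by apply: vext => i; rewrite /y /vsub /vadd /vscale; ring.
  rewrite dot_scaler -/(nsq g) -vnorm_sq.
  have -> : / vnorm g * (vnorm g * vnorm g) = vnorm g by field.
  have := HU y Hy; have := HLo x ltac:(lra); lra.
Qed.

Lemma exp_le' x y : x <= y -> exp x <= exp y.
Proof. case=> [H|->]; [apply: Rlt_le; exact: exp_increasing| lra]. Qed.

Lemma exp_ge1x x : 1 + x <= exp x.
Proof.
case: (Req_dec x 0) => [->|H]; first by rewrite exp_0; lra.
apply: Rlt_le; exact: exp_ineq1.
Qed.

Lemma exp_conv A B t : 0 <= t <= 1 -> exp (t * A + (1 - t) * B) <= t * exp A + (1 - t) * exp B.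
Proof.
move=> Ht; set w := t * A + (1 - t) * B.
have EA : exp A = exp w * exp (A - w) by rewrite -exp_plus; congr exp; ring.
have EB : exp B = exp w * exp (B - w) by rewrite -exp_plus; congr exp; ring.
have HA := exp_ge1x (A - w); have HB := exp_ge1x (B - w).
have Hw := exp_pos w.
rewrite EA EB.
have H1 := Rmult_le_compat_l (exp w) _ _ (Rlt_le _ _ Hw) HA.
have H2 := Rmult_le_compat_l (exp w) _ _ (Rlt_le _ _ Hw) HB.
have H3 : t * (exp w * (1 + (A - w))) <= t * (exp w * exp (A - w)) by apply: Rmult_le_compat_l; lra.
have H4 : (1 - t) * (exp w * (1 + (B - w))) <= (1 - t) * (exp w * exp (B - w)) by apply: Rmult_le_compat_l; lra.
have : t * (exp w * exp (A - w)) + (1 - t) * (exp w * exp (B - w)) >=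
        exp w * (t * (1 + (A - w)) + (1 - t) * (1 + (B - w))) by lra.
have -> : t * (1 + (A - w)) + (1 - t) * (1 + (B - w)) = 1 by rewrite /w; ring.
lra.
Qed.

Lemma bern_conc x t : 0 < x -> 0 <= t <= 1 -> Rpower x t <= t * x + (1 - t).
Proof.
move=> Hx Ht; rewrite /Rpower.
have := exp_conv (ln x) 0 t Ht.
rewrite exp_ln // exp_0 Rmult_0_r Rplus_0_r Rmult_1_r //.
Qed.

Lemma Rpower_pos x t : 0 < Rpower x t.
Proof. exact: exp_pos. Qed.

Lemma bern_conv x t : 0 < x -> 1 <= t -> 1 + t * (x - 1) <= Rpower x t.
Proof.
move=> Hx Ht.
set v := Rpower x t.
have Hv : 0 < v := Rpower_pos _ _.
have E : Rpower v (/ t) = x.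
  rewrite /v Rpower_mult Rinv_r; [exact: Rpower_1| lra].
have Hit : 0 <= / t <= 1.
  split; first by apply: Rlt_le; apply: Rinv_0_lt_compat; lra.
  rewrite -Rinv_1; apply: Rinv_le_contravar; lra.
have := bern_conc _ _ Hv Hit; rewrite E => H.
have : t * x <= t * (/ t * v + (1 - / t)) by apply: Rmult_le_compat_l; lra.
have -> : t * (/ t * v + (1 - / t)) = v + t - 1 by field; lra.
lra.
Qed.

Definition pw (s : nat) (t : R) := Rpower (INR s) t.

Lemma pw_pos s t : 0 < pw s t.
Proof. exact: exp_pos. Qed.

Lemma pw_1 t : pw 1 t = 1.
Proof. by rewrite /pw /Rpower /= ln_1 Rmult_0_r exp_0. Qed.

Lemma pw_succ_exp s t : (0 < s)%nat -> pw s (t + 1) = INR s * pw s t.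
Proof.
move=> Hs; rewrite /pw Rpower_plus Rpower_1; first ring.
apply: lt_0_INR; lia.
Qed.

Lemma pw_mono_pos a b t : (0 < a)%nat -> (a <= b)%nat -> 0 <= t -> pw a t <= pw b t.
Proof.
move=> Ha Hab Ht; apply: Rle_Rpower_l => //; split.
- apply: lt_0_INR; lia.
- apply: le_INR; lia.
Qed.

Lemma ln_le' a b : 0 < a -> a <= b -> ln a <= ln b.
Proof. move=> Ha; case=> [H|->]; [apply: Rlt_le; exact: ln_increasing| lra]. Qed.

Lemma pw_mono_neg a b t : (0 < a)%nat -> (a <= b)%nat -> t <= 0 -> pw b t <= pw a t.
Proof.
move=> Ha Hab Ht; rewrite /pw /Rpower; apply: exp_le'.
have : ln (INR a) <= ln (INR b).
  apply: ln_le'; [apply: lt_0_INR; lia| apply: le_INR; lia].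
nra.
Qed.

Lemma pw_ratio a b t : (0 < a)%nat -> (0 < b)%nat -> pw a t = Rpower (INR a / INR b) t * pw b t.
Proof.
move=> Ha Hb; rewrite /pw Rpower_mult_distr.
- congr Rpower; field; apply: not_0_INR; lia.
- apply: Rdiv_lt_0_compat; apply: lt_0_INR; lia.
- apply: lt_0_INR; lia.
Qed.

Definition psum (N : nat) (t : R) := \big[Rplus/0]_(0 <= k < N) pw k.+1 t.

Lemma psum_S N t : psum N.+1 t = psum N t + pw N.+1 t.
Proof. by rewrite /psum big_nat_recr. Qed.

Lemma psum_ge0 N t : 0 <= psum N t.
Proof. elim: N => [|N IH]; first by rewrite /psum big_geq //; lra.
rewrite psum_S; have := pw_pos N.+1 t; lra. Qed.

Lemma psum_lower_small t N : t <= 0 -> (0 < N)%nat -> INR N * pw N t <= psum N t.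
Proof.
move=> Ht HN.
have H : forall M, (M <= N)%nat -> INR M * pw N t <= psum M t.
  elim=> [|M IH] HM; first by rewrite /psum big_geq //=; lra.
  rewrite psum_S S_INR.
  have := IH ltac:(lia); have := pw_mono_neg M.+1 N t ltac:(lia) ltac:(lia) Ht.
  lra.
exact: H.
Qed.

Lemma psum_upper_big t N : 0 <= t -> INR N * pw N t >= psum N t.
Proof.
move=> Ht.
have H : forall M, (M <= N)%nat -> INR M * pw N t >= psum M t.
  elim=> [|M IH] HM; first by rewrite /psum big_geq //=; lra.
  rewrite psum_S S_INR.
  have := IH ltac:(lia); have := pw_mono_pos M.+1 N t ltac:(lia) ltac:(lia) Ht.
  lra.
exact: H.
Qed.

Lemma psum_lower_big t N : 0 <= t -> (0 < N)%nat -> pw N (t + 1) / (t + 1) <= psum N t.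
Proof.
move=> Ht; elim: N => [|N IH] HN; first lia.
case: N IH HN => [|N] IH HN.
  rewrite /psum big_nat1 !pw_1; apply: (Rmult_le_reg_r (t + 1)); first lra.
  rewrite /Rdiv Rmult_assoc Rinv_l; lra.
rewrite psum_S.
have IH' := IH ltac:(lia).
suff : pw N.+2 (t + 1) - pw N.+1 (t + 1) <= (t + 1) * pw N.+2 t.
  move=> H; apply: (Rmult_le_reg_r (t + 1)); first lra.
  move: IH'; rewrite /Rdiv => IH'.
  have E : pw N.+2 (t + 1) * / (t + 1) * (t + 1) = pw N.+2 (t + 1) by field; lra.
  have E2 : pw N.+1 (t + 1) * / (t + 1) * (t + 1) = pw N.+1 (t + 1) by field; lra.
  rewrite E Rmult_plus_distr_r.
  have := Rmult_le_compat_r (t + 1) _ _ ltac:(lra) IH'; rewrite E2; lra.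
have HN1 : 0 < INR N.+1 by apply: lt_0_INR; lia.
have HN2 : 0 < INR N.+2 by apply: lt_0_INR; lia.
rewrite (pw_ratio N.+1 N.+2 (t + 1)) //.
have Hb := bern_conv (INR N.+1 / INR N.+2) (t + 1) ltac:(apply: Rdiv_lt_0_compat; lra) ltac:(lra).
rewrite (pw_succ_exp N.+2 t) //.
have Hp := pw_pos N.+2 t.
have E : INR N.+1 / INR N.+2 - 1 = - / INR N.+2.
  rewrite !S_INR; field; have := pos_INR N; lra.
rewrite E in Hb.
have : Rpower (INR N.+1 / INR N.+2) (t + 1) * (INR N.+2 * pw N.+2 t) >=
       (1 + (t + 1) * - / INR N.+2) * (INR N.+2 * pw N.+2 t).
  by apply: Rle_ge; apply: Rmult_le_compat_r; [apply: Rmult_le_pos; lra| exact: Hb].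
have -> : (1 + (t + 1) * - / INR N.+2) * (INR N.+2 * pw N.+2 t) =
   INR N.+2 * pw N.+2 t - (t + 1) * pw N.+2 t by field; lra.
lra.
Qed.

Lemma psum_upper_small p N : 0 < p <= 1 -> (0 < N)%nat -> psum N (p - 1) <= pw N p / p.
Proof.
move=> Hp; elim: N => [|N IH] HN; first lia.
case: N IH HN => [|N] IH HN.
  rewrite /psum big_nat1 !pw_1; apply: (Rmult_le_reg_r p); first lra.
  rewrite /Rdiv Rmult_assoc Rinv_l; lra.
rewrite psum_S.
have IH' := IH ltac:(lia).
suff : p * pw N.+2 (p - 1) <= pw N.+2 p - pw N.+1 p.
  move=> H; apply: (Rmult_le_reg_r p); first lra.
  move: IH'; rewrite /Rdiv => IH'.
  have E : pw N.+2 p * / p * p = pw N.+2 p by field; lra.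
  have E2 : pw N.+1 p * / p * p = pw N.+1 p by field; lra.
  rewrite E Rmult_plus_distr_r.
  have := Rmult_le_compat_r p _ _ ltac:(lra) IH'; rewrite E2; lra.
have HN1 : 0 < INR N.+1 by apply: lt_0_INR; lia.
have HN2 : 0 < INR N.+2 by apply: lt_0_INR; lia.
rewrite (pw_ratio N.+1 N.+2 p) //.
have Hb := bern_conc (INR N.+1 / INR N.+2) p ltac:(apply: Rdiv_lt_0_compat; lra) ltac:(lra).
have Es : pw N.+2 p = INR N.+2 * pw N.+2 (p - 1).
  rewrite -pw_succ_exp //; congr pw; ring.
rewrite Es.
have Hq := pw_pos N.+2 (p - 1).
have E : p * (INR N.+1 / INR N.+2) + (1 - p) = 1 - p * / INR N.+2.
  rewrite !S_INR; field; have := pos_INR N; lra.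
rewrite E in Hb.
have : Rpower (INR N.+1 / INR N.+2) p * (INR N.+2 * pw N.+2 (p - 1)) <=
       (1 - p * / INR N.+2) * (INR N.+2 * pw N.+2 (p - 1)).
  by apply: Rmult_le_compat_r; [apply: Rmult_le_pos; lra| exact: Hb].
have -> : (1 - p * / INR N.+2) * (INR N.+2 * pw N.+2 (p - 1)) =
   INR N.+2 * pw N.+2 (p - 1) - p * pw N.+2 (p - 1) by field; lra.
lra.
Qed.

Lemma psum_lower e : 0 < e -> exists c, 0 < c /\ forall N, (0 < N)%nat -> c * pw N e <= psum N (e - 1).
Proof.
move=> He; case: (Rle_or_lt e 1) => He1.
- exists 1; split; first lra.
  move=> N HN; have := psum_lower_small (e - 1) N ltac:(lra) HN.
  have -> : e = (e - 1) + 1 by ring.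
  rewrite pw_succ_exp //; have -> : e - 1 + 1 - 1 = e - 1 by ring. lra.
- exists (/ e); split; first by apply: Rinv_0_lt_compat; lra.
  move=> N HN; have := psum_lower_big (e - 1) N ltac:(lra) HN.
  have -> : e - 1 + 1 = e by ring.
  rewrite /Rdiv Rmult_comm; lra.
Qed.

Lemma psum_upper p : 0 < p -> exists K, 0 < K /\ forall N, (0 < N)%nat -> psum N (p - 1) <= K * pw N p.
Proof.
move=> Hp; case: (Rle_or_lt p 1) => Hp1.
- exists (/ p); split; first by apply: Rinv_0_lt_compat; lra.
  move=> N HN; have := psum_upper_small p N ltac:(lra) HN.
  rewrite /Rdiv Rmult_comm; lra.
- exists 1; split; first lra.
  move=> N HN; have := psum_upper_big (p - 1) N ltac:(lra).
  have -> : p = (p - 1) + 1 by ring.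
  rewrite pw_succ_exp //; have -> : p - 1 + 1 - 1 = p - 1 by ring. lra.
Qed.

Definition incr (phi : nat -> nat) := forall j, (phi j < phi j.+1)%nat.

Lemma incr_ge phi : incr phi -> forall j, (j <= phi j)%nat.
Proof. move=> H; elim=> [|j IH]; first lia. have := H j; lia. Qed.

Lemma incr_mono phi : incr phi -> forall a b, (a < b)%nat -> (phi a < phi b)%nat.
Proof.
move=> H a; elim=> [|b IH] Hab; first lia.
case: (ltnP a b) => Hab'.
- have := IH Hab'; have := H b; lia.
- have -> : a = b by lia. exact: H.
Qed.

Lemma subseq_cv v l phi : Un_cv v l -> incr phi -> Un_cv (fun j => v (phi j)) l.
Proof.
move=> Hv Hp eps He; have [N HN] := Hv eps He; exists N => j Hj.
apply: HN; have := incr_ge phi Hp j; lia.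
Qed.

Lemma cv_const c : Un_cv (fun _ => c) c.
Proof. move=> eps He; exists 0%nat => j _; rewrite /Rdist Rminus_diag Rabs_R0; lra. Qed.

Lemma bw1 (u : nat -> R) B : (forall k, Rabs (u k) <= B) ->
  exists phi, incr phi /\ exists l, Un_cv (fun j => u (phi j)) l.
Proof.
move=> HB.
have HB' : forall k, (fun c => - B <= c <= B) (u k).
  move=> k /=; have := HB k; have := Rle_abs (u k); have := Rle_abs (- u k); rewrite Rabs_Ropp; lra.
have [l Hl] := Rtopology.Bolzano_Weierstrass u _ (Rtopology.compact_P3 (- B) B) HB'.
have Hsel : forall N j, exists p, (N <= p)%nat /\ Rabs (u p - l) < / INR j.+1.
  move=> N j.
  have Hj : 0 < / INR j.+1 by apply: Rinv_0_lt_compat; apply: lt_0_INR; lia.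
  have Hnb : Rtopology.neighbourhood (fun y => Rabs (y - l) < / INR j.+1) l.
    by exists (mkposreal _ Hj) => y Hy; exact: Hy.
  have [p [Hp HV]] := Hl (fun y => Rabs (y - l) < / INR j.+1) N Hnb.
  exists p; split => //; apply/leP; exact: Hp.
have sel : forall N j, {p | (N <= p)%nat /\ Rabs (u p - l) < / INR j.+1}.
  move=> N j; apply: constructive_indefinite_description; exact: Hsel.
pose phi := fix phi j := match j with 0 => sval (sel 0%nat 0%nat) | S j' => sval (sel (S (phi j')) (S j')) end.
have P1 : forall j, Rabs (u (phi j) - l) < / INR j.+1.
  case=> [|j] /=; [exact: (proj2 (svalP (sel _ _)))| exact: (proj2 (svalP (sel _ _)))].
have P2 : incr phi.
  move=> j /=; exact: (proj1 (svalP (sel _ _))).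
exists phi; split => //; exists l => eps He.
have [N [HN HN0]] := archimed_cor1 eps He.
exists N => j Hj; rewrite /Rdist.
apply: Rlt_le_trans (P1 j) _.
apply: Rle_trans _ (Rlt_le _ _ HN).
apply: Rinv_le_contravar; first by apply: lt_0_INR; lia.
apply: le_INR; lia.
Qed.

Lemma cv_sum {I} (s : seq I) (F : nat -> I -> R) :
  (forall i, Un_cv (fun j => F j i) 0) -> Un_cv (fun j => \big[Rplus/0]_(i <- s) F j i) 0.
Proof.
move=> H; elim: s => [|a s IH].
  have := cv_const 0; apply: Un_cv_ext => j; by rewrite big_nil.
have := CV_plus _ _ _ _ (H a) IH; rewrite Rplus_0_r.
by apply: Un_cv_ext => j; rewrite big_cons.
Qed.

Lemma cv_sqrt0 (a : nat -> R) : (forall j, 0 <= a j) -> Un_cv a 0 -> Un_cv (fun j => sqrt (a j)) 0.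
Proof.
move=> Ha H eps He; have [N HN] := H (eps * eps) ltac:(nra).
exists N => j Hj; have := HN j Hj; rewrite /Rdist !Rminus_0_r => Hj'.
rewrite Rabs_right; last by apply: Rle_ge; apply: sqrt_pos.
rewrite Rabs_right in Hj'; last by apply: Rle_ge; apply: Ha.
rewrite -(sqrt_square eps); last lra.
apply: sqrt_lt_1_alt; split => //; exact: Ha.
Qed.

Lemma bwn {n} (u : nat -> Vec n) B : (forall k, vnorm (u k) <= B) ->
  exists psi, incr psi /\ exists y, Un_cv (fun j => vnorm (vsub (u (psi j)) y)) 0.
Proof.
move=> HB.
have claim : forall J, (J <= n)%nat -> exists psi (y : Vec n), incr psi /\
    forall i : 'I_n, (i < J)%nat -> Un_cv (fun j => u (psi j) i) (y i).
  elim=> [|J IH] HJ.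
    by exists id, vzero; split => // j /=; lia.
  have [psi [y [Hpsi Hy]]] := IH ltac:(lia).
  have HJn : (J < n)%nat by lia.
  set i0 := Ordinal HJn.
  have [phi [Hphi [l Hl]]] := bw1 (fun j => u (psi j) i0) B
    (fun k => Rle_trans _ _ _ (comp_le_norm _ _) (HB _)).
  exists (fun j => psi (phi j)), (fun i => if i == i0 then l else y i); split.
    move=> j; apply: (incr_mono psi Hpsi); exact: Hphi.
  move=> i Hi; case: eqP => [->|Hne] //.
  have Hi' : (i < J)%nat.
    have : nat_of_ord i <> J by move=> E; apply: Hne; apply: val_inj.
    lia.
  exact: subseq_cv (Hy i Hi') Hphi.
have [psi [y [Hpsi Hy]]] := claim n (leqnn n).
exists psi; split => //; exists y.
rewrite /vnorm.
apply: cv_sqrt0; first by move=> j; exact: nsq_ge0.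
apply: cv_sum => i.
have Hc := CV_minus _ _ _ _ (Hy i (ltn_ord i)) (cv_const (y i)).
rewrite Rminus_diag in Hc.
have := CV_mult _ _ _ _ Hc Hc; rewrite Rmult_0_r.
by apply: Un_cv_ext => j; rewrite /vsub.
Qed.

Definition CP {n} (f : Vec n -> R) Rb C :=
  (forall x z, vnorm x <= Rb -> vnorm z <= Rb -> f x - f z <= C * vnorm (vsub x z)) /\
  (forall x g, vnorm x <= Rb -> subgrad f x g -> vnorm g <= C).

Lemma CP_mono {n} (f : Vec n -> R) Rb C C' : 0 <= C -> C <= C' -> CP f Rb C -> CP f Rb C'.
Proof.
move=> HC HCC [H1 H2]; split.
- move=> x z Hx Hz; have := H1 x z Hx Hz; have := vnorm_ge0 (vsub x z); nra.
- move=> x g Hx Hg; have := H2 x g Hx Hg; lra.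
Qed.

Lemma conv_CP {n} (f : Vec n -> R) Rb : convex_fun f -> 0 <= Rb -> exists C, 0 <= C /\ CP f Rb C.
Proof. move=> Hf HRb; have [C [HC [H1 H2]]] := conv_props f Rb Hf HRb; by exists C. Qed.

Lemma finite_choice (P : nat -> R -> Prop) m :
  (forall i C C', 0 <= C -> C <= C' -> P i C -> P i C') ->
  (forall i, (i < m)%nat -> exists C, 0 <= C /\ P i C) ->
  exists C, 0 <= C /\ forall i, (i < m)%nat -> P i C.
Proof.
move=> Hmono; elim: m => [|m IH] H.
  by exists 0; split; [lra| move=> i; lia].
have [C1 [HC1 H1]] := IH (fun i Hi => H i ltac:(lia)).
have [C2 [HC2 H2]] := H m ltac:(lia).
exists (Rmax C1 C2); split; first by apply: Rle_trans HC1 (Rmax_l _ _).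
move=> i Hi; case: (ltnP i m) => Him.
- exact: (Hmono i C1 _ HC1 (Rmax_l _ _) (H1 i Him)).
- have -> : i = m by lia.
  exact: (Hmono m C2 _ HC2 (Rmax_r _ _) H2).
Qed.

Lemma fsum_S {n} m (fs : nat -> Vec n -> R) v : fsum m.+1 fs v = fsum m fs v + fs m v.
Proof. by rewrite /fsum big_nat_recr. Qed.

Lemma fsum_convex {n} m (fs : nat -> Vec n -> R) :
  (forall i, (i < m)%nat -> convex_fun (fs i)) -> convex_fun (fsum m fs).
Proof.
elim: m => [|m IH] H x y t Ht.
  rewrite /fsum !big_geq //; lra.
rewrite !fsum_S.
have := IH (fun i Hi => H i ltac:(lia)) x y t Ht.
have := H m ltac:(lia) x y t Ht.
lra.
Qed.

Lemma sc_convex {n} (h : Vec n -> R) mu : 0 < mu -> strongly_convex h mu -> convex_fun h.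
Proof.
move=> Hmu H x y t Ht; have := H x y t Ht.
have := pow2_ge_0 (vnorm (vsub x y)).
have : 0 <= mu / 2 * t * (1 - t).
  apply: Rmult_le_pos; [apply: Rmult_le_pos|]; lra.
nra.
Qed.

Lemma dot_flip {n} (g a b : Vec n) : dot g (vsub a b) = - dot (vsub b a) g.
Proof. rewrite dot_subr dot_subl (dot_sym a g) (dot_sym b g); ring. Qed.

Lemma sum_range_lin (N : nat) (A B : nat -> R) c :
  \big[Rplus/0]_(0 <= j < N) (A j - B j + c) =
  \big[Rplus/0]_(0 <= j < N) A j - \big[Rplus/0]_(0 <= j < N) B j + INR N * c.
Proof.
elim: N => [|N IH]; first by rewrite !big_geq //=; ring.
rewrite !sumS IH S_INR; ring.
Qed.

Lemma step_k {n} m (X : Vec n -> Prop) (fs : nat -> Vec n -> R) (h : Vec n -> R)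
  (gam lam L0 C Rb : R) (xs : nat -> Vec n) (xh : Vec n) :
  (0 < m)%nat -> convex_set X -> (forall v, X v -> vnorm v <= Rb) -> X (xs 0%nat) -> X xh ->
  (forall i, (i < m)%nat -> CP (fs i) Rb C) -> CP h Rb C -> 0 <= C ->
  0 < gam -> 0 < lam -> lam <= L0 ->
  (forall i, (i < m)%nat -> exists gf gh, subgrad (fs i) (xs i) gf /\ subgrad h (xs i) gh /\
     is_proj X (vsub (xs i) (vscale gam (vadd gf (vscale (lam / INR m) gh)))) (xs i.+1)) ->
  nsq (vsub (xs m) xh) <= nsq (vsub (xs 0%nat) xh)
     - 2 * gam * (fsum m fs (xs 0%nat) - fsum m fs xh + lam * (h (xs 0%nat) - h xh))
     + gam * gam * (INR m * (4 * INR m + 1) * ((C + L0 * C) * (C + L0 * C)))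
  /\ X (xs m).
Proof.
move=> Hm HX HXb HX0 HXh Hfs Hh HC Hgam Hlam HL0 Hrun.
set G := C + L0 * C.
have HG : 0 <= G by rewrite /G; nra.
have Hmr : 1 <= INR m by have := le_INR 1 m ltac:(lia); rewrite /=; lra.
have Hlm : 0 <= lam / INR m <= L0.
  split; first by apply: Rmult_le_pos; [lra| apply: Rlt_le; apply: Rinv_0_lt_compat; lra].
  apply: Rle_trans HL0; apply: (Rmult_le_reg_r (INR m)); first lra.
  rewrite /Rdiv Rmult_assoc Rinv_l; nra.
set x0 := xs 0%nat.
set T := fun j => fs j x0 - fs j xh + lam / INR m * (h x0 - h xh).
have claim : forall i, (i <= m)%nat -> X (xs i) /\ vnorm (vsub (xs i) x0) <= INR i * gam * G /\
   nsq (vsub (xs i) xh) <= nsq (vsub x0 xh) - 2 * gam * \big[Rplus/0]_(0 <= j < i) T j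
      + gam * gam * (INR i * (4 * INR m + 1) * (G * G)).
  elim=> [|i IH] Hi.
    rewrite big_geq // /= vsub_sym.
    have -> : vsub x0 (xs 0%nat) = vzero by apply: vext => k; rewrite /x0 /vsub /vzero; ring.
    rewrite vnorm_vzero; split => //; split; first lra.
    rewrite /x0; lra.
  have [Xi [Hdi Hni]] := IH ltac:(lia).
  have [gf [gh [Hgf [Hgh Hpr]]]] := Hrun i ltac:(lia).
  set g := vadd gf (vscale (lam / INR m) gh) in Hpr.
  set z := vsub (xs i) (vscale gam g) in Hpr.
  have Xp : X (xs i.+1) by case: Hpr.
  have Hxi := HXb _ Xi; have Hx0 := HXb _ HX0; have Hxh := HXb _ HXh.
  have Hgf' := (proj2 (Hfs i ltac:(lia))) _ _ Hxi Hgf.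
  have Hgh' := (proj2 Hh) _ _ Hxi Hgh.
  have Hng : vnorm g <= G.
    apply: Rle_trans (vnorm_triangle _ _) _.
    rewrite vnorm_scale Rabs_right; last lra.
    rewrite /G; have := vnorm_ge0 gh; nra.
  have Hdist : vnorm (vsub (xs i.+1) (xs i)) <= gam * G.
    apply: Rle_trans (proj_nonexp _ _ _ _ HX Hpr Xi) _.
    have -> : vsub z (xs i) = vscale (- gam) g by apply: vext => k; rewrite /z /vsub /vscale; ring.
    rewrite vnorm_scale Rabs_Ropp Rabs_right; last lra.
    apply: Rmult_le_compat_l; lra.
  have Hdi' : vnorm (vsub (xs i.+1) x0) <= INR i.+1 * gam * G.
    apply: Rle_trans (vsub_triangle _ (xs i) _) _.
    rewrite S_INR; lra.
  split => //; split => //.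
  rewrite sumS S_INR.
  have H1 : nsq (vsub (xs i.+1) xh) <= nsq (vsub z xh).
    apply: vnorm_le_inv; exact: (proj_nonexp _ _ _ _ HX Hpr HXh).
  have H2 : vsub z xh = vsub (vsub (xs i) xh) (vscale gam g)
    by apply: vext => k; rewrite /z /vsub /vscale; ring.
  rewrite H2 nsq_sub_scale in H1.
  have Hdot : dot (vsub (xs i) xh) g =
     dot (vsub (xs i) xh) gf + lam / INR m * dot (vsub (xs i) xh) gh
    by rewrite /g dot_addr dot_scaler.
  have Sf := Hgf xh; rewrite dot_flip (dot_sym _ gf) in Sf.
  have Sh := Hgh xh; rewrite dot_flip (dot_sym _ gh) in Sh.
  have Lf := (proj1 (Hfs i ltac:(lia))) _ _ Hx0 Hxi.
  have Lh := (proj1 Hh) _ _ Hx0 Hxi.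
  rewrite vsub_sym -/x0 in Lf Lh.
  have Hdi0 := vnorm_ge0 (vsub (xs i) x0).
  have E1 : fs i x0 - fs i (xs i) <= C * (INR i * gam * G).
    apply: Rle_trans Lf _; apply: Rmult_le_compat_l => //.
  have E2 : h x0 - h (xs i) <= C * (INR i * gam * G).
    apply: Rle_trans Lh _; apply: Rmult_le_compat_l => //.
  have Hdotlb : dot (vsub (xs i) xh) g >= T i - (1 + lam / INR m) * C * (INR i * gam * G).
    rewrite Hdot /T (dot_sym gf) (dot_sym gh) in Sf Sh *.
    have : lam / INR m * (h x0 - h (xs i)) <= lam / INR m * (C * (INR i * gam * G)).
      apply: Rmult_le_compat_l; lra.
    have : lam / INR m * (h (xs i) - h xh) <= lam / INR m * dot (vsub (xs i) xh) gh.
      apply: Rmult_le_compat_l; lra.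
    lra.
  have Hgg : nsq g <= G * G by rewrite -vnorm_sq; have := vnorm_ge0 g; nra.
  have HiG : 0 <= INR i * gam * G by apply: Rmult_le_pos; [apply: Rmult_le_pos; [exact: pos_INR|lra]|lra].
  have Hc1 : (1 + lam / INR m) * C <= G by rewrite /G; nra.
  have Hii : INR i + 1 <= INR m by have := le_INR i.+1 m ltac:(lia); rewrite S_INR; lra.
  have K1 : 2 * gam * ((1 + lam / INR m) * C * (INR i * gam * G)) <= 2 * gam * (G * (INR i * gam * G)).
    apply: Rmult_le_compat_l; [lra|]; apply: Rmult_le_compat_r => //.
  have K2 : gam * gam * (G * G) * (2 * INR i + 1) <= gam * gam * (G * G) * (4 * INR m + 1).
    apply: Rmult_le_compat_l; [apply: Rmult_le_pos; nra| lra].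
  have K3 : 2 * gam * dot (vsub (xs i) xh) g >= 2 * gam * (T i - (1 + lam / INR m) * C * (INR i * gam * G)).
    apply: Rle_ge; apply: Rmult_le_compat_l; lra.
  have K4 : gam * gam * nsq g <= gam * gam * (G * G) by apply: Rmult_le_compat_l; nra.
  have E3 : 2 * gam * (G * (INR i * gam * G)) = gam * gam * (G * G) * (2 * INR i) by ring.
  nra.
have [X1 [_ H1]] := claim m (leqnn m).
split => //.
apply: Rle_trans H1 _.
rewrite /T sum_range_lin.
have -> : INR m * (lam / INR m * (h x0 - h xh)) = lam * (h x0 - h xh) by field; lra.
rewrite /fsum; lra.
Qed.

Lemma pw_exp_mono N t1 t2 : (0 < N)%nat -> t1 <= t2 -> pw N t1 <= pw N t2.
Proof.
move=> HN Ht; apply: Rle_Rpower => //.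
have := le_INR 1 N ltac:(lia); rewrite /=; lra.
Qed.

Lemma pw_plus N t1 t2 : pw N (t1 + t2) = pw N t1 * pw N t2.
Proof. by rewrite /pw Rpower_plus. Qed.

Lemma pw_opp N t : pw N (- t) = / pw N t.
Proof. by rewrite /pw Rpower_Ropp. Qed.

Lemma pw_double N t : (0 < N)%nat -> 0 <= t -> pw N.+1 t <= Rpower 2 t * pw N t.
Proof.
move=> HN Ht.
have HN' : 0 < INR N by apply: lt_0_INR; lia.
apply: Rle_trans (Rle_Rpower_l (INR N.+1) (2 * INR N) t Ht _) _.
  split; first by apply: lt_0_INR; lia.
  rewrite S_INR; have := le_INR 1 N ltac:(lia); rewrite /=; lra.
rewrite /pw Rpower_mult_distr //; lra.
Qed.

Lemma pw_to0 d : 0 < d -> forall eps, 0 < eps -> exists N0, (0 < N0)%nat /\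
  forall N, (N0 <= N)%nat -> pw N (- d) < eps.
Proof.
move=> Hd eps He.
have [N0 HN0] := INR_unbounded (exp (- ln eps / d)).
exists N0.+1; split; first lia.
move=> N HN.
have HNp : 0 < INR N by apply: lt_0_INR; lia.
have HNN : INR N0 <= INR N by apply: le_INR; lia.
have Hl : - ln eps / d < ln (INR N).
  rewrite -(ln_exp (- ln eps / d)); apply: ln_increasing; first exact: exp_pos.
  lra.
rewrite /pw /Rpower -(exp_ln eps He).
apply: exp_increasing.
have : - ln eps < d * ln (INR N).
  have := Rmult_lt_compat_l d _ _ Hd Hl.
  have -> : d * (- ln eps / d) = - ln eps by field; lra.
  done.
lra.
Qed.

Lemma div_bound X W K1 K2 t1 t2 N : (0 < N)%nat -> 0 <= K1 -> 0 < K2 ->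
  X <= K1 * pw N t1 -> K2 * pw N t2 <= W -> X / W <= (K1 / K2) * pw N (t1 - t2).
Proof.
move=> HN HK1 HK2 HX HW.
have Hp1 := pw_pos N t1; have Hp2 := pw_pos N t2.
have HW0 : 0 < W by nra.
have E : pw N (t1 - t2) = pw N t1 * / pw N t2 by rewrite /Rminus pw_plus pw_opp.
rewrite E.
case: (Rle_or_lt X 0) => HX0.
  have : X / W <= 0.
    rewrite /Rdiv; have := Rinv_0_lt_compat _ HW0; nra.
  have : 0 <= K1 / K2 * (pw N t1 * / pw N t2).
    apply: Rmult_le_pos; first by apply: Rmult_le_pos; [lra| apply: Rlt_le; apply: Rinv_0_lt_compat].
    apply: Rmult_le_pos; [lra| apply: Rlt_le; apply: Rinv_0_lt_compat; lra].
  lra.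
have -> : K1 / K2 * (pw N t1 * / pw N t2) = (K1 * pw N t1) / (K2 * pw N t2) by field; lra.
apply: Rle_trans (_ : X / (K2 * pw N t2) <= _).
  rewrite /Rdiv; apply: Rmult_le_compat_l; first lra.
  apply: Rinv_le_contravar => //; nra.
rewrite /Rdiv; apply: Rmult_le_compat_r => //.
apply: Rlt_le; apply: Rinv_0_lt_compat; nra.
Qed.

Lemma telesc (c D : nat -> R) Dmax N : (forall k, c k <= c k.+1) -> (forall k, 0 <= c k) ->
  (forall k, 0 <= D k <= Dmax) ->
  \big[Rplus/0]_(0 <= k < N) (c k * (D k - D k.+1)) <= c N * Dmax.
Proof.
move=> Hc Hc0 HD.
have claim : forall N, \big[Rplus/0]_(0 <= k < N) (c k * (D k - D k.+1)) <= c N * (Dmax - D N).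
  elim=> [|M IH]; first by rewrite big_geq //; have := Hc0 0%nat; have := HD 0%nat; nra.
  rewrite sumS.
  have := Hc M; have := HD M; have := HD M.+1; have := Hc0 M; nra.
apply: Rle_trans (claim N) _; have := Hc0 N; have := HD N; nra.
Qed.

Lemma sum_le_gen (N : nat) (F G : nat -> R) : (forall k, F k <= G k) ->
  \big[Rplus/0]_(0 <= k < N) F k <= \big[Rplus/0]_(0 <= k < N) G k.
Proof. move=> H; exact: sum_le. Qed.

Lemma gam_pw gam0 eps k : gam_seq gam0 eps k = gam0 * pw k.+1 (- (1/2 + eps/2)).
Proof. by rewrite pw_opp /gam_seq /pw. Qed.
Lemma lam_pw lam0 eps k : lam_seq lam0 eps k = lam0 * pw k.+1 (- (1/2 - eps)).
Proof. by rewrite pw_opp /lam_seq /pw. Qed.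
Lemma w_pw gam0 eps r k : 0 < gam0 ->
  Rpower (gam_seq gam0 eps k) r = Rpower gam0 r * pw k.+1 (- ((1/2 + eps/2) * r)).
Proof.
move=> Hg; rewrite gam_pw /pw /Rpower ln_mult //; last exact: exp_pos.
rewrite ln_exp -exp_plus; congr exp; ring.
Qed.

Lemma rate_lemma (gam0 lam0 eps r Dmax Mh Cst : R) (F H D : nat -> R) :
  0 < eps < 1/2 -> r < 1 -> 0 < gam0 -> 0 < lam0 -> 0 <= Dmax -> 0 <= Mh -> 0 <= Cst ->
  (forall k, 0 <= F k) -> (forall k, - Mh <= H k) -> (forall k, 0 <= D k <= Dmax) ->
  (forall k, D k.+1 <= D k - 2 * gam_seq gam0 eps k * (F k + lam_seq lam0 eps k * H k)
                  + gam_seq gam0 eps k * gam_seq gam0 eps k * Cst) ->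
  (exists Kb, forall N, (0 < N)%nat ->
     (/ \big[Rplus/0]_(0 <= k < N) Rpower (gam_seq gam0 eps k) r) *
       \big[Rplus/0]_(0 <= k < N) (Rpower (gam_seq gam0 eps k) r * F k)
     <= Kb * pw N (- (1/2 - eps))) /\
  (forall ep, 0 < ep -> exists N0, (0 < N0)%nat /\ forall N, (N0 <= N)%nat ->
     (/ \big[Rplus/0]_(0 <= k < N) Rpower (gam_seq gam0 eps k) r) *
       \big[Rplus/0]_(0 <= k < N) (Rpower (gam_seq gam0 eps k) r * H k) < ep).
Proof.
move=> Heps Hr Hg0 Hl0 HDm HMh HCst HF HH HD Hrec.
pose a := 1/2 + eps/2. pose b := 1/2 - eps. pose q := a * r. pose e := 1 - q.
pose A0 := Rpower gam0 r.
have HA0 : 0 < A0 := exp_pos _.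
have Hq1 : 0 < a - q by rewrite /q /a; nra.
have He : 0 < e by rewrite /e /q /a; nra.
have Heb : 0 < e - b by rewrite /e /q /b /a; nra.
pose dl := Rmin (3 * eps / 2) (e / 2).
have Hdl : 0 < dl by apply: Rmin_pos; lra.
have Hdl1 : dl <= 3 * eps / 2 := Rmin_l _ _.
have Hdl2 : dl <= e / 2 := Rmin_r _ _.
have Hed : 0 < e - dl by lra.
pose g k := gam0 * pw k.+1 (- a).
pose l k := lam0 * pw k.+1 (- b).
pose w k := A0 * pw k.+1 (- q).
have Eg : forall k, gam_seq gam0 eps k = g k by move=> k; rewrite gam_pw.
have El : forall k, lam_seq lam0 eps k = l k by move=> k; rewrite lam_pw.
have Ew : forall k, Rpower (gam_seq gam0 eps k) r = w k by move=> k; rewrite w_pw.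
have Hgp : forall k, 0 < g k by move=> k; apply: Rmult_lt_0_compat => //; exact: pw_pos.
have Hlp : forall k, 0 < l k by move=> k; apply: Rmult_lt_0_compat => //; exact: pw_pos.
have Hwp : forall k, 0 < w k by move=> k; apply: Rmult_lt_0_compat => //; exact: pw_pos.
pose c k := A0 / (2 * gam0) * pw k.+1 (a - q).
pose c' k := A0 / (2 * gam0 * lam0) * pw k.+1 (a - q + b).
have Ec : forall k, c k * (2 * g k) = w k.
  move=> k; rewrite /c /g /w.
  have : pw k.+1 (a - q) * pw k.+1 (- a) = pw k.+1 (- q) by rewrite -pw_plus; congr pw; ring.
  move=> E; rewrite -E; field; lra.
have Ec' : forall k, c' k * (2 * g k * l k) = w k.
  move=> k; rewrite /c' /g /l /w.
  have : pw k.+1 (a - q + b) * pw k.+1 (- a) * pw k.+1 (- b) = pw k.+1 (- q) by rewrite -!pw_plus; congr pw; ring.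
  move=> E; rewrite -E; field; lra.
have Hc0 : forall k, 0 <= c k.
  move=> k; apply: Rmult_le_pos; last exact: Rlt_le (pw_pos _ _).
  apply: Rmult_le_pos; [lra| apply: Rlt_le; apply: Rinv_0_lt_compat; lra].
have Hc'0 : forall k, 0 <= c' k.
  move=> k; apply: Rmult_le_pos; last exact: Rlt_le (pw_pos _ _).
  apply: Rmult_le_pos; [lra| apply: Rlt_le; apply: Rinv_0_lt_compat; nra].
have Hcm : forall k, c k <= c k.+1.
  move=> k; apply: Rmult_le_compat_l; first by have := Hc0 k; rewrite /c => _;
    apply: Rmult_le_pos; [lra| apply: Rlt_le; apply: Rinv_0_lt_compat; lra].
  apply: pw_mono_pos; lia || lra.
have Hc'm : forall k, c' k <= c' k.+1.
  move=> k; apply: Rmult_le_compat_l; first by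
    apply: Rmult_le_pos; [lra| apply: Rlt_le; apply: Rinv_0_lt_compat; nra].
  apply: pw_mono_pos; [lia|lia|rewrite /b; lra].
pose KB := Mh * A0 * lam0 + Cst / 2 * A0 * gam0.
have IB : forall k, w k * F k <= c k * (D k - D k.+1) + KB * pw k.+1 ((e - b) - 1).
  move=> k.
  have R := Hrec k; rewrite Eg El in R.
  have HHk := HH k.
  have P1 : 2 * g k * F k <= (D k - D k.+1) + 2 * (g k * l k) * Mh + g k * g k * Cst.
    have : - (g k * l k * H k) <= g k * l k * Mh.
      have := Rmult_le_compat_l (g k * l k) _ _ (Rlt_le _ _ (Rmult_lt_0_compat _ _ (Hgp k) (Hlp k))) HHk.
      lra.
    lra.
  have P2 := Rmult_le_compat_l (c k) _ _ (Hc0 k) P1.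
  have E1 : c k * (2 * g k * F k) = w k * F k by rewrite -(Ec k); ring.
  have E2 : c k * (D k - D k.+1 + 2 * (g k * l k) * Mh + g k * g k * Cst) =
     c k * (D k - D k.+1) + Mh * (w k * l k) + Cst / 2 * (w k * g k).
    rewrite -(Ec k); field.
  rewrite E1 E2 in P2.
  have E3 : w k * l k = A0 * lam0 * pw k.+1 ((e - b) - 1).
    rewrite /w /l; have : pw k.+1 (- q) * pw k.+1 (- b) = pw k.+1 ((e - b) - 1).
      by rewrite -pw_plus /e; congr pw; ring.
    move=> <-; ring.
  have E4 : w k * g k <= A0 * gam0 * pw k.+1 ((e - b) - 1).
    rewrite /w /g; have : pw k.+1 (- q) * pw k.+1 (- b) = pw k.+1 ((e - b) - 1).
      by rewrite -pw_plus /e; congr pw; ring.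
    move=> <-.
    have Hab : pw k.+1 (- a) <= pw k.+1 (- b) by apply: pw_exp_mono; [lia| rewrite /a /b; lra].
    have Hnn : 0 <= A0 * gam0 * pw k.+1 (- q).
      apply: Rmult_le_pos; [nra| exact: Rlt_le (pw_pos _ _)].
    have := Rmult_le_compat_l _ _ _ Hnn Hab.
    lra.
  rewrite E3 in P2.
  have : Cst / 2 * (w k * g k) <= Cst / 2 * (A0 * gam0 * pw k.+1 ((e - b) - 1)).
    apply: Rmult_le_compat_l => //; lra.
  rewrite /KB; lra.
pose KA := Cst * A0 * gam0 / (2 * lam0).
have IA : forall k, w k * H k <= c' k * (D k - D k.+1) + KA * pw k.+1 ((e - dl) - 1).
  move=> k.
  have R := Hrec k; rewrite Eg El in R.
  have HFk := HF k.
  have P1 : 2 * g k * l k * H k <= (D k - D k.+1) + g k * g k * Cst.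
    have := Rmult_le_compat_l (g k) _ _ (Rlt_le _ _ (Hgp k)) HFk; lra.
  have P2 := Rmult_le_compat_l (c' k) _ _ (Hc'0 k) P1.
  have E1 : c' k * (2 * g k * l k * H k) = w k * H k by rewrite -(Ec' k); ring.
  rewrite E1 Rmult_plus_distr_l in P2.
  have E2 : c' k * (g k * g k * Cst) = KA * pw k.+1 (- q - a + b).
    rewrite /c' /g /KA.
    have : pw k.+1 (a - q + b) * pw k.+1 (- a) * pw k.+1 (- a) = pw k.+1 (- q - a + b)
      by rewrite -!pw_plus; congr pw; ring.
    move=> <-; field; lra.
  rewrite E2 in P2.
  have : pw k.+1 (- q - a + b) <= pw k.+1 ((e - dl) - 1).
    apply: pw_exp_mono; [lia| rewrite /e /a /b; lra].
  have : 0 <= KA.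
    rewrite /KA; apply: Rmult_le_pos; [apply: Rmult_le_pos; [apply: Rmult_le_pos|]|]; try lra.
    apply: Rlt_le; apply: Rinv_0_lt_compat; lra.
  nra.
have EW : forall N, \big[Rplus/0]_(0 <= k < N) Rpower (gam_seq gam0 eps k) r = A0 * psum N (e - 1).
  move=> N; rewrite /psum -sum_scal; apply: sum_ext => k; rewrite Ew /w /e; congr (_ * pw _ _); ring.
have [c0 [Hc0p Hlow]] := psum_lower e He.
have HWlow : forall N, (0 < N)%nat -> (A0 * c0) * pw N e <= A0 * psum N (e - 1).
  move=> N HN; have := Hlow N HN; have := HA0; nra.
have HWpos : forall N, (0 < N)%nat -> 0 < A0 * psum N (e - 1).
  move=> N HN; have := HWlow N HN; have := pw_pos N e; have : 0 < A0 * c0 by nra. nra.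
split.
- have [K1 [HK1 Hup1]] := psum_upper (e - b) Heb.
  pose Kc := A0 / (2 * gam0) * Dmax * Rpower 2 (a - q).
  have HKc : 0 <= Kc.
    rewrite /Kc; apply: Rmult_le_pos; [apply: Rmult_le_pos|]; [|lra| exact: Rlt_le (exp_pos _)].
    apply: Rmult_le_pos; [lra| apply: Rlt_le; apply: Rinv_0_lt_compat; lra].
  have HKB : 0 <= KB.
    rewrite /KB; have : 0 <= Mh * A0 * lam0 by apply: Rmult_le_pos; nra.
    have : 0 <= Cst / 2 * A0 * gam0 by apply: Rmult_le_pos; [apply: Rmult_le_pos|]; lra.
    lra.
  exists (Kc / (A0 * c0) + KB * K1 / (A0 * c0)) => N HN.
  rewrite EW.
  have S1 : \big[Rplus/0]_(0 <= k < N) (Rpower (gam_seq gam0 eps k) r * F k) <=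
       Kc * pw N (a - q) + KB * K1 * pw N (e - b).
    apply: Rle_trans (_ : \big[Rplus/0]_(0 <= k < N) (c k * (D k - D k.+1) + KB * pw k.+1 ((e - b) - 1)) <= _).
      apply: sum_le_gen => k; rewrite Ew; exact: IB.
    rewrite sum_add sum_scal -/(psum N _).
    have T1 := telesc c D Dmax N Hcm Hc0 HD.
    have T2 : c N * Dmax <= Kc * pw N (a - q).
      rewrite /c /Kc.
      have := pw_double N (a - q) HN ltac:(lra).
      have : 0 <= A0 / (2 * gam0) * Dmax.
        apply: Rmult_le_pos => //; apply: Rmult_le_pos; [lra| apply: Rlt_le; apply: Rinv_0_lt_compat; lra].
      nra.
    have T3 := Hup1 N HN.
    have : KB * psum N (e - b - 1) <= KB * (K1 * pw N (e - b)) by apply: Rmult_le_compat_l.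
    lra.
  have Wp := HWpos N HN.
  apply: Rle_trans (_ : / (A0 * psum N (e - 1)) * (Kc * pw N (a - q) + KB * K1 * pw N (e - b)) <= _).
    apply: Rmult_le_compat_l => //; apply: Rlt_le; exact: Rinv_0_lt_compat.
  rewrite Rmult_plus_distr_l.
  have HA0c0 : 0 < A0 * c0 by nra.
  have D1 := div_bound (Kc * pw N (a - q)) _ Kc (A0 * c0) (a - q) e N HN HKc HA0c0 (Rle_refl _) (HWlow N HN).
  have D2 := div_bound (KB * K1 * pw N (e - b)) _ (KB * K1) (A0 * c0) (e - b) e N HN
     ltac:(nra) HA0c0 (Rle_refl _) (HWlow N HN).
  rewrite /Rdiv in D1 D2.
  have P1 : pw N (a - q - e) <= pw N (- (1/2 - eps)) by apply: pw_exp_mono => //; rewrite /a /e; lra.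
  have P2 : pw N (e - b - e) = pw N (- (1/2 - eps)) by congr pw; rewrite /b; ring.
  rewrite P2 in D2.
  have : Kc * / (A0 * c0) * pw N (a - q - e) <= Kc * / (A0 * c0) * pw N (- (1/2 - eps)).
    apply: Rmult_le_compat_l => //; apply: Rmult_le_pos => //; apply: Rlt_le; exact: Rinv_0_lt_compat.
  rewrite /Rdiv. lra.
- have [K3 [HK3 Hup3]] := psum_upper (e - dl) Hed.
  pose Kc := A0 / (2 * gam0 * lam0) * Dmax * Rpower 2 (a - q + b).
  have HKc : 0 <= Kc.
    rewrite /Kc; apply: Rmult_le_pos; [apply: Rmult_le_pos|]; [|lra| exact: Rlt_le (exp_pos _)].
    apply: Rmult_le_pos; [lra| apply: Rlt_le; apply: Rinv_0_lt_compat; nra].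
  have HKA : 0 <= KA.
    rewrite /KA; apply: Rmult_le_pos; [apply: Rmult_le_pos; [apply: Rmult_le_pos|]|]; try lra.
    apply: Rlt_le; apply: Rinv_0_lt_compat; lra.
  have HA0c0 : 0 < A0 * c0 by nra.
  pose K4 := Kc / (A0 * c0). pose K5 := KA * K3 / (A0 * c0).
  have HK4 : 0 <= K4 by rewrite /K4; apply: Rmult_le_pos => //; apply: Rlt_le; exact: Rinv_0_lt_compat.
  have HK5 : 0 <= K5 by rewrite /K5; apply: Rmult_le_pos; [nra| apply: Rlt_le; exact: Rinv_0_lt_compat].
  have main : forall N, (0 < N)%nat ->
     (/ \big[Rplus/0]_(0 <= k < N) Rpower (gam_seq gam0 eps k) r) *
       \big[Rplus/0]_(0 <= k < N) (Rpower (gam_seq gam0 eps k) r * H k)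
     <= K4 * pw N (- (eps / 2)) + K5 * pw N (- dl).
    move=> N HN; rewrite EW.
    have S1 : \big[Rplus/0]_(0 <= k < N) (Rpower (gam_seq gam0 eps k) r * H k) <=
         Kc * pw N (a - q + b) + KA * K3 * pw N (e - dl).
      apply: Rle_trans (_ : \big[Rplus/0]_(0 <= k < N) (c' k * (D k - D k.+1) + KA * pw k.+1 ((e - dl) - 1)) <= _).
        apply: sum_le_gen => k; rewrite Ew; exact: IA.
      rewrite sum_add sum_scal -/(psum N _).
      have T1 := telesc c' D Dmax N Hc'm Hc'0 HD.
      have T2 : c' N * Dmax <= Kc * pw N (a - q + b).
        rewrite /c' /Kc.
        have := pw_double N (a - q + b) HN ltac:(rewrite /b; lra).
        have : 0 <= A0 / (2 * gam0 * lam0) * Dmax.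
          apply: Rmult_le_pos => //; apply: Rmult_le_pos; [lra| apply: Rlt_le; apply: Rinv_0_lt_compat; nra].
        nra.
      have T3 := Hup3 N HN.
      have : KA * psum N (e - dl - 1) <= KA * (K3 * pw N (e - dl)) by apply: Rmult_le_compat_l.
      lra.
    have Wp := HWpos N HN.
    apply: Rle_trans (_ : / (A0 * psum N (e - 1)) * (Kc * pw N (a - q + b) + KA * K3 * pw N (e - dl)) <= _).
      apply: Rmult_le_compat_l => //; apply: Rlt_le; exact: Rinv_0_lt_compat.
    rewrite Rmult_plus_distr_l.
    have D1 := div_bound (Kc * pw N (a - q + b)) _ Kc (A0 * c0) (a - q + b) e N HN HKc HA0c0 (Rle_refl _) (HWlow N HN).
    have D2 := div_bound (KA * K3 * pw N (e - dl)) _ (KA * K3) (A0 * c0) (e - dl) e N HN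
       ltac:(nra) HA0c0 (Rle_refl _) (HWlow N HN).
    have P1e : a - q + b - e = - (eps / 2) by rewrite /e /a /b; field.
    have P1 : pw N (a - q + b - e) = pw N (- (eps / 2)) by rewrite P1e.
    have P2 : pw N (e - dl - e) = pw N (- dl) by congr pw; ring.
    rewrite P1 in D1; rewrite P2 in D2.
    rewrite /K4 /K5 /Rdiv in D1 D2 *. lra.
  move=> ep Hep.
  have [N1 [HN1 HP1]] := pw_to0 (eps / 2) ltac:(lra) (ep / (2 * (K4 + 1))) ltac:(apply: Rdiv_lt_0_compat; lra).
  have [N2 [HN2 HP2]] := pw_to0 dl Hdl (ep / (2 * (K5 + 1))) ltac:(apply: Rdiv_lt_0_compat; lra).
  exists (maxn N1 N2); split; first lia.
  move=> N HN.
  have HN0 : (0 < N)%nat by lia.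
  apply: Rle_lt_trans (main N HN0) _.
  have Q1 := HP1 N ltac:(lia); have Q2 := HP2 N ltac:(lia).
  have Q1' : K4 * pw N (- (eps / 2)) <= K4 * (ep / (2 * (K4 + 1))) by apply: Rmult_le_compat_l; lra.
  have Q2' : K5 * pw N (- dl) <= K5 * (ep / (2 * (K5 + 1))) by apply: Rmult_le_compat_l; lra.
  have E1 : K4 * (ep / (2 * (K4 + 1))) < ep / 2.
    apply: (Rmult_lt_reg_r (2 * (K4 + 1))); first lra.
    have -> : K4 * (ep / (2 * (K4 + 1))) * (2 * (K4 + 1)) = K4 * ep by field; lra.
    nra.
  have E2 : K5 * (ep / (2 * (K5 + 1))) < ep / 2.
    apply: (Rmult_lt_reg_r (2 * (K5 + 1))); first lra.
    have -> : K5 * (ep / (2 * (K5 + 1))) * (2 * (K5 + 1)) = K5 * ep by field; lra.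
    nra.
  lra.
Qed.

Lemma final_conv {n} (X : Vec n -> Prop) (f h : Vec n -> R) (xb : nat -> Vec n) xh Rb C mu :
  convex_set X -> Defs.closed_set X -> (forall v, X v -> vnorm v <= Rb) -> convex_fun f ->
  0 < mu -> strongly_convex h mu -> 0 <= C ->
  CP f Rb C -> CP h Rb C -> is_xh X f h xh ->
  (forall N, (0 < N)%nat -> X (xb N)) ->
  (forall ep, 0 < ep -> exists N0, forall N, (N0 <= N)%nat -> f (xb N) - f xh < ep) ->
  (forall ep, 0 < ep -> exists N0, forall N, (N0 <= N)%nat -> h (xb N) - h xh < ep) ->
  Un_cv (fun N => vnorm (vsub (xb N) xh)) 0.
Proof.
move=> HX Hcl HXb Hf Hmu Hsc HC [Lf _] [Lh _] [[Xxh Hmin] Hhmin] Xxb Cf Ch.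
apply: NNPP => Hn.
have [ep [Hep Hbad]] : exists ep, 0 < ep /\ forall N, exists N', (N <= N')%nat /\ ep <= vnorm (vsub (xb N') xh).
  apply: NNPP => H1; apply: Hn => eps He; apply: NNPP => H2; apply: H1.
  exists eps; split; first lra.
  move=> N; apply: NNPP => H3; apply: H2; exists N => k Hk.
  rewrite /Rdist Rminus_0_r Rabs_right; last by apply: Rle_ge; exact: vnorm_ge0.
  apply: Rnot_le_lt => H4; apply: H3; exists k; split => //; lia.
have sel : forall j, {N' | (j.+1 <= N')%nat /\ ep <= vnorm (vsub (xb N') xh)}.
  move=> j; apply: constructive_indefinite_description; exact: Hbad.
pose z j := xb (sval (sel j)).
have Hz : forall j, X (z j) by move=> j; apply: Xxb; have := proj1 (svalP (sel j)); lia.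
have Hzb : forall j, ep <= vnorm (vsub (z j) xh) by move=> j; exact: (proj2 (svalP (sel j))).
have Hzj : forall j, (j.+1 <= sval (sel j))%nat by move=> j; exact: (proj1 (svalP (sel j))).
have [psi [Hpsi [y Hy]]] := bwn z Rb (fun j => HXb _ (Hz j)).
have Xy : X y := Hcl (fun j => z (psi j)) y (fun j => Hz (psi j)) Hy.
have pick : forall d, 0 < d -> exists j, vnorm (vsub (z (psi j)) y) < d /\
    f (z (psi j)) - f xh < d /\ h (z (psi j)) - h xh < d /\ ep <= vnorm (vsub (z (psi j)) xh).
  move=> d Hd.
  have [J1 HJ1] := Hy d Hd; have [Nf HNf] := Cf d Hd; have [Nh HNh] := Ch d Hd.
  pose j := maxn J1 (maxn Nf Nh).
  have Hj : (j <= psi j)%nat := incr_ge psi Hpsi j.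
  have Hs := Hzj (psi j).
  exists j; split; [|split; [|split]].
  - have := HJ1 j ltac:(rewrite /j; lia); rewrite /Rdist Rminus_0_r Rabs_right //.
    apply: Rle_ge; exact: vnorm_ge0.
  - apply: HNf; have : (Nf <= j)%nat by rewrite /j; lia. lia.
  - apply: HNh; have : (Nh <= j)%nat by rewrite /j; lia. lia.
  - exact: Hzb.
have HyX := HXb _ Xy.
have fy : f y <= f xh.
  apply: Rle_plus_epsilon => d Hd.
  have [j [H1 [H2 _]]] := pick (d / (C + 1)) ltac:(apply: Rdiv_lt_0_compat; lra).
  have L := Lf y (z (psi j)) HyX (HXb _ (Hz _)).
  rewrite vsub_sym in L.
  have : C * vnorm (vsub (z (psi j)) y) <= C * (d / (C + 1)) by apply: Rmult_le_compat_l; lra.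
  have : d / (C + 1) * (C + 1) = d by field; lra.
  nra.
have hy : h y <= h xh.
  apply: Rle_plus_epsilon => d Hd.
  have [j [H1 [_ [H2 _]]]] := pick (d / (C + 1)) ltac:(apply: Rdiv_lt_0_compat; lra).
  have L := Lh y (z (psi j)) HyX (HXb _ (Hz _)).
  rewrite vsub_sym in L.
  have : C * vnorm (vsub (z (psi j)) y) <= C * (d / (C + 1)) by apply: Rmult_le_compat_l; lra.
  have : d / (C + 1) * (C + 1) = d by field; lra.
  nra.
have dy : ep <= vnorm (vsub y xh).
  apply: Rle_plus_epsilon => d Hd.
  have [j [H1 [_ [_ H4]]]] := pick d Hd.
  have := vsub_triangle (z (psi j)) y xh; lra.
set q := vadd (vscale (1/2) y) (vscale (1 - 1/2) xh).
have Xq : X q := HX y xh (1/2) Xy Xxh ltac:(lra).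
have fq : f q <= f xh by have := Hf y xh (1/2) ltac:(lra); rewrite -/q; lra.
have Aq : is_argmin X f q.
  split => // v Xv; have := Hmin v Xv; lra.
have hq := Hhmin q Aq.
have := Hsc y xh (1/2) ltac:(lra); rewrite -/q.
have := vnorm_ge0 (vsub y xh).
have Hhxy := Hhmin y (conj Xy (fun v Xv => Rle_trans _ _ _ fy (Hmin v Xv))).
move=> Hn0 Hs.
have HK : 0 < mu / 2 * (1 / 2) * (1 - 1 / 2) by lra.
have HV : vnorm (vsub y xh) ^ 2 <= 0.
  apply: (Rmult_le_reg_l _ _ _ HK); lra.
have : ep * ep <= vnorm (vsub y xh) ^ 2 by nra.
nra.
Qed.

Lemma W_pos gam0 eps r N : (0 < N)%nat -> 0 < \big[Rplus/0]_(0 <= k < N) Rpower (gam_seq gam0 eps k) r.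
Proof.
case: N => [|N] HN; first lia.
rewrite sumS.
have := sum_ge0 (index_iota 0 N) (fun k => Rpower (gam_seq gam0 eps k) r) (fun k => Rlt_le _ _ (exp_pos _)).
have := exp_pos (r * ln (gam_seq gam0 eps N)).
rewrite /Rpower; lra.
Qed.

Lemma avg_shift (N : nat) (w A : nat -> R) c : 0 < \big[Rplus/0]_(0 <= k < N) w k ->
  (/ \big[Rplus/0]_(0 <= k < N) w k) * \big[Rplus/0]_(0 <= k < N) (w k * A k) - c =
  (/ \big[Rplus/0]_(0 <= k < N) w k) * \big[Rplus/0]_(0 <= k < N) (w k * (A k - c)).
Proof.
move=> HW.
have -> : \big[Rplus/0]_(0 <= k < N) (w k * (A k - c)) =
   \big[Rplus/0]_(0 <= k < N) (w k * A k) + (- c) * \big[Rplus/0]_(0 <= k < N) w k.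
  rewrite -sum_scal -sum_add; apply: sum_ext => k; ring.
field; lra.
Qed.

Theorem theorem2 (n m : nat) (X : Vec n -> Prop) (fs : nat -> Vec n -> R)
  (h : Vec n -> R) (mu_h : R) (eps r gam0 lam0 : R)
  (x : nat -> nat -> Vec n) (xh : Vec n) :
  (exists x0, X x0) -> convex_set X -> compact_set X ->
  (forall i, (i < m)%nat -> convex_fun (fs i)) ->
  0 < mu_h -> strongly_convex h mu_h ->
  is_xh X (fsum m fs) h xh ->
  0 < eps < (1 / 2) -> r < 1 ->
  0 < gam0 -> 0 < lam0 -> gam0 * lam0 * mu_h <= 2 * INR m ->
  IRIG_run m X fs h (gam_seq gam0 eps) (lam_seq lam0 eps) x ->
  Un_cv (fun N => vnorm (vsub (xbar (gam_seq gam0 eps) r x N) xh)) 0 /\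
  (exists C : R, exists N0 : nat, forall N : nat, (N0 <= N)%nat ->
     Rabs (fsum m fs (xbar (gam_seq gam0 eps) r x N) - fsum m fs xh)
       <= C / Rpower (INR N) ((1 / 2) - eps)).
Proof.
move=> _ HX [Hcl [M HM]] Hfs Hmu Hsc Hxh Heps Hr Hg0 Hl0 Hm [HX0 [Hnext Hstep]].
have Hm0 : (0 < m)%nat.
  case: m Hm {Hfs Hxh Hnext Hstep} => [|m'] Hm /=; last lia.
  have : 0 < gam0 * lam0 * mu_h by apply: Rmult_lt_0_compat => //; nra.
  simpl in Hm; lra.
set Rb := Rmax M 0.
have HRb : 0 <= Rb := Rmax_r _ _.
have HXb : forall v, X v -> vnorm v <= Rb by move=> v Xv; apply: Rle_trans (HM v Xv) (Rmax_l _ _).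
have hconv := sc_convex h mu_h Hmu Hsc.
have fconv := fsum_convex m fs Hfs.
have [C1 [HC1 HP1]] := finite_choice (fun i C => CP (fs i) Rb C) m
  (fun i C C' HC HCC' HP => CP_mono (fs i) Rb C C' HC HCC' HP)
  (fun i Hi => conv_CP (fs i) Rb (Hfs i Hi) HRb).
have [C2 [HC2 HP2]] := conv_CP h Rb hconv HRb.
have [C3 [HC3 HP3]] := conv_CP (fsum m fs) Rb fconv HRb.
set C := Rmax (Rmax C1 C2) C3.
have HC1C : C1 <= C by apply: Rle_trans (Rmax_l _ _) (Rmax_l _ _).
have HC2C : C2 <= C by apply: Rle_trans (Rmax_r _ _) (Rmax_l _ _).
have HC3C : C3 <= C := Rmax_r _ _.
have HC : 0 <= C by lra.
have CPfs : forall i, (i < m)%nat -> CP (fs i) Rb C.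
  move=> i Hi; exact: (CP_mono _ _ _ _ HC1 HC1C (HP1 i Hi)).
have CPh : CP h Rb C := CP_mono _ _ _ _ HC2 HC2C HP2.
have CPf : CP (fsum m fs) Rb C := CP_mono _ _ _ _ HC3 HC3C HP3.
have [[Xxh Hmin] Hhmin] := Hxh.
have Xk : forall k, X (x k 0%nat).
  elim=> [|k IH] //; rewrite Hnext.
  case: m Hm0 Hstep {Hfs Hxh Hnext Hm fconv HP1 HP3 CPfs CPf C1 HC1 HC1C C3 HC3 HC3C Hmin Hhmin C HC HC2C CPh} => [|m'] Hm0 Hstep; first lia.
  have [gf [gh [_ [_ [Hp _]]]]] := Hstep k m' (ltnSn _); exact: Hp.
set G := C + lam0 * C.
set Cst := INR m * (4 * INR m + 1) * (G * G).
have HCst : 0 <= Cst.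
  rewrite /Cst; apply: Rmult_le_pos; last by nra.
  apply: Rmult_le_pos; [exact: pos_INR| have := pos_INR m; lra].
have Hgam : forall k, 0 < gam_seq gam0 eps k.
  move=> k; rewrite /gam_seq; apply: Rdiv_lt_0_compat => //; exact: exp_pos.
have Hlam : forall k, 0 < lam_seq lam0 eps k.
  move=> k; rewrite /lam_seq; apply: Rdiv_lt_0_compat => //; exact: exp_pos.
have Hlam0 : forall k, lam_seq lam0 eps k <= lam0.
  move=> k; rewrite lam_pw.
  have : pw k.+1 (- (1/2 - eps)) <= pw k.+1 0 by apply: pw_exp_mono; [lia| lra].
  rewrite /pw Rpower_O; last by apply: lt_0_INR; lia.
  nra.
pose D k := nsq (vsub (x k 0%nat) xh).
pose F k := fsum m fs (x k 0%nat) - fsum m fs xh.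
pose H k := h (x k 0%nat) - h xh.
have Hrec : forall k, D k.+1 <= D k - 2 * gam_seq gam0 eps k * (F k + lam_seq lam0 eps k * H k)
                  + gam_seq gam0 eps k * gam_seq gam0 eps k * Cst.
  move=> k.
  have [S _] := step_k m X fs h (gam_seq gam0 eps k) (lam_seq lam0 eps k) lam0 C Rb (x k) xh
    Hm0 HX HXb (Xk k) Xxh CPfs CPh HC (Hgam k) (Hlam k) (Hlam0 k) (Hstep k).
  rewrite /D /F /H Hnext /Cst /G; lra.
set Dmax := (Rb + Rb) * (Rb + Rb).
set Mh := C * (Rb + Rb).
have HF : forall k, 0 <= F k by move=> k; rewrite /F; have := Hmin _ (Xk k); lra.
have HH : forall k, - Mh <= H k.
  move=> k; rewrite /H /Mh.
  have L := (proj1 CPh) xh (x k 0%nat) (HXb _ Xxh) (HXb _ (Xk k)).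
  have := vsub_norm_le xh (x k 0%nat).
  have := HXb _ Xxh; have := HXb _ (Xk k).
  have : C * vnorm (vsub xh (x k 0%nat)) <= C * (Rb + Rb).
    apply: Rmult_le_compat_l => //; have := vsub_norm_le xh (x k 0%nat); have := HXb _ Xxh; have := HXb _ (Xk k); lra.
  lra.
have HD : forall k, 0 <= D k <= Dmax.
  move=> k; rewrite /D /Dmax; split; first exact: nsq_ge0.
  rewrite -vnorm_sq.
  have := vsub_norm_le (x k 0%nat) xh; have := HXb _ Xxh; have := HXb _ (Xk k).
  have := vnorm_ge0 (vsub (x k 0%nat) xh); nra.
have [[Kb HKb] Ha] := rate_lemma gam0 lam0 eps r Dmax Mh Cst F H D Heps Hr Hg0 Hl0
  ltac:(rewrite /Dmax; nra) ltac:(rewrite /Mh; nra) HCst HF HH HD Hrec.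
pose w k := Rpower (gam_seq gam0 eps k) r.
have Hw : forall k, 0 <= w k by move=> k; exact: Rlt_le (exp_pos _).
have Exb : forall N, xbar (gam_seq gam0 eps) r x N =
  vscale (/ \big[Rplus/0]_(0 <= k < N) w k) (comb (index_iota 0 N) w (fun k => x k 0%nat)) by [].
have Xxb : forall N, (0 < N)%nat -> X (xbar (gam_seq gam0 eps) r x N).
  move=> N HN; rewrite Exb.
  exact: (comb_ind (fun v _ => X v) (set_mix X HX) (index_iota 0 N) w (fun k => x k 0%nat)
            (fun _ => 0) Hw (fun k => Xk k) (W_pos gam0 eps r N HN)).
have Jf : forall N, (0 < N)%nat -> fsum m fs (xbar (gam_seq gam0 eps) r x N) - fsum m fs xh <=
    (/ \big[Rplus/0]_(0 <= k < N) w k) * \big[Rplus/0]_(0 <= k < N) (w k * F k).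
  move=> N HN; rewrite /F -avg_shift; last exact: W_pos.
  rewrite Exb.
  have := comb_ind (fun v c => fsum m fs v <= c) (jensen_mix _ fconv) (index_iota 0 N) w (fun k => x k 0%nat)
            (fun k => fsum m fs (x k 0%nat)) Hw (fun k => Rle_refl _) (W_pos gam0 eps r N HN).
  move=> HH0; rewrite /Rminus; apply: Rplus_le_compat_r; exact: HH0.
have Jh : forall N, (0 < N)%nat -> h (xbar (gam_seq gam0 eps) r x N) - h xh <=
    (/ \big[Rplus/0]_(0 <= k < N) w k) * \big[Rplus/0]_(0 <= k < N) (w k * H k).
  move=> N HN; rewrite /H -avg_shift; last exact: W_pos.
  rewrite Exb.
  have := comb_ind (fun v c => h v <= c) (jensen_mix _ hconv) (index_iota 0 N) w (fun k => x k 0%nat)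
            (fun k => h (x k 0%nat)) Hw (fun k => Rle_refl _) (W_pos gam0 eps r N HN).
  move=> HH0; rewrite /Rminus; apply: Rplus_le_compat_r; exact: HH0.
have Hb : forall N, (0 < N)%nat ->
    fsum m fs (xbar (gam_seq gam0 eps) r x N) - fsum m fs xh <= Kb * pw N (- (1/2 - eps)).
  move=> N HN; apply: Rle_trans (Jf N HN) _; exact: HKb.
split.
- apply: (final_conv X (fsum m fs) h (xbar (gam_seq gam0 eps) r x) xh Rb C mu_h HX Hcl HXb fconv
          Hmu Hsc HC CPf CPh Hxh Xxb).
  + move=> ep Hep.
    have [N1 [HN1 HP]] := pw_to0 (1/2 - eps) ltac:(lra) (ep / (Rabs Kb + 1)) ltac:(apply: Rdiv_lt_0_compat; have := Rabs_pos Kb; lra).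
    exists N1 => N HN.
    apply: Rle_lt_trans (Hb N ltac:(lia)) _.
    have Hp := HP N HN.
    have Hpp := pw_pos N (- (1 / 2 - eps)).
    have := Rle_abs Kb; have := Rabs_pos Kb.
    have : Rabs Kb * pw N (- (1 / 2 - eps)) <= Rabs Kb * (ep / (Rabs Kb + 1)).
      apply: Rmult_le_compat_l; [exact: Rabs_pos| lra].
    have : ep / (Rabs Kb + 1) * (Rabs Kb + 1) = ep by field; have := Rabs_pos Kb; lra.
    nra.
  + move=> ep Hep.
    have [N0 [HN0 HP]] := Ha ep Hep.
    exists N0 => N HN.
    apply: Rle_lt_trans (Jh N ltac:(lia)) _; exact: HP.
- exists Kb, 1%nat => N HN.
  have HN' : (0 < N)%nat by lia.
  have Hge : 0 <= fsum m fs (xbar (gam_seq gam0 eps) r x N) - fsum m fs xh.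
    have := Hmin _ (Xxb N HN'); lra.
  rewrite Rabs_right; last lra.
  apply: Rle_trans (Hb N HN') _.
  rewrite pw_opp /pw /Rdiv; lra.
Qed.
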